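(* Let $N>4$ be an integer. Consider the problem of finding $z\in C^2(\mathbb{R})$ with $$-z''(t)+(N-4)z'(t)+(2N-4)z(t)=\frac{N-1}{2}\,z(t)^2\qquad (t\in\mathbb{R}),$$ $$\lim_{t\to-\infty}e^tz(t)=0=\lim_{t\to+\infty}e^tz(t).$$ This problem has a continuum of non-trivial positive solutions; in particular, there exist uncountably many pairwise distinct solutions $z$ with $z(t)>0$ for all $t\in\mathbb{R}$.
   Context: Via $w=e^tz$, this problem is equivalent to the radial entire problem $-w''+(N-2)w'+(N-1)w=\frac{N-1}{2}e^{-t}w^2$ on $\mathbb{R}$ with $w(\pm\infty)=0$, coming from $\Delta^2u=S_2[u]$ in $\mathbb{R}^N$. *)

(* Defs.v *)
From Stdlib Require Import Reals.
From Coquelicot Require Import Coquelicot.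
Open Scope R_scope.

Definition C2 (z : R -> R) : Prop :=
  (forall t, ex_derive z t) /\
  (forall t, ex_derive (Derive z) t) /\
  (forall t, continuous (Derive (Derive z)) t).

Definition is_solution (N : nat) (z : R -> R) : Prop :=
  C2 z /\
  (forall t : R,
     - Derive (Derive z) t + (INR N - 4) * Derive z t + (2 * INR N - 4) * z t
     = (INR N - 1) / 2 * (z t) ^ 2) /\
  is_lim (fun t => exp t * z t) m_infty 0 /\
  is_lim (fun t => exp t * z t) p_infty 0.

Definition positive_fun (z : R -> R) : Prop := forall t : R, 0 < z t.

(* Main.v *)
Require Import Defs.
From Stdlib Require Import Reals Lra Lia Psatz Classical ClassicalEpsilon.
From Coquelicot Require Import Coquelicot.
Open Scope R_scope.

Lemma cont_ex_RInt (f : R -> R) a b : (forall s, continuous f s) -> ex_RInt f a b.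
Proof. intros H; apply (@ex_RInt_continuous R_CompleteNormedModule); intros; apply H. Qed.

Lemma cont_is_derive_RInt (f : R -> R) a t : (forall s, continuous f s) ->
  is_derive (fun t => RInt f a t) t (f t).
Proof.
  intros H. apply is_derive_RInt with (a := a).
  - apply filter_forall. intros b. apply RInt_correct. now apply cont_ex_RInt.
  - apply H.
Qed.

Lemma RInt_exp_pos (C lam t : R) : 0 < lam ->
  RInt (fun s => C * exp (lam * s)) 0 t = C * (exp (lam * t) - 1) / lam.
Proof.
  intros Hl.
  apply is_RInt_unique.
  replace (C * (exp (lam * t) - 1) / lam) with
     (minus ((fun s => C * exp (lam * s) / lam) t) ((fun s => C * exp (lam * s) / lam) 0)).
  2:{ unfold minus, plus, opp; simpl. rewrite Rmult_0_r, exp_0. field. lra. }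
  apply (@is_RInt_derive R_CompleteNormedModule (fun s => C * exp (lam * s) / lam)).
  - intros x _. auto_derive; auto. field. lra.
  - intros x _. apply (ex_derive_continuous (fun s => C * exp (_ * s))). auto_derive; auto.
Qed.

Lemma RInt_exp_neg (C lam t : R) : 0 < lam ->
  RInt (fun s => C * exp (- lam * s)) t 0 = C * (exp (- lam * t) - 1) / lam.
Proof.
  intros Hl.
  apply is_RInt_unique.
  replace (C * (exp (- lam * t) - 1) / lam) with
     (minus ((fun s => - C * exp (- lam * s) / lam) 0) ((fun s => - C * exp (- lam * s) / lam) t)).
  2:{ unfold minus, plus, opp; simpl. rewrite Rmult_0_r, exp_0. field. lra. }
  apply (@is_RInt_derive R_CompleteNormedModule (fun s => - C * exp (- lam * s) / lam)).
  - intros x _. auto_derive; auto. field. lra.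
  - intros x _. apply (ex_derive_continuous (fun s => C * exp (_ * s))). auto_derive; auto.
Qed.

Lemma RInt_exp_bound (f : R -> R) (C lam t : R) :
  0 < lam -> (forall s, continuous f s) ->
  (forall s, Rabs (f s) <= C * exp (lam * Rabs s)) ->
  Rabs (RInt f 0 t) <= C * (exp (lam * Rabs t) - 1) / lam.
Proof.
  intros Hl Hc Hb.
  assert (Hca : forall s, continuous (fun x => Rabs (f x)) s).
  { intros s; apply continuous_Rabs_comp, Hc. }
  destruct (Rle_or_lt 0 t) as [Ht|Ht].
  - rewrite (Rabs_pos_eq t Ht).
    eapply Rle_trans. apply abs_RInt_le; auto. now apply cont_ex_RInt.
    rewrite <- RInt_exp_pos by auto.
    apply RInt_le; auto. now apply cont_ex_RInt.
    apply cont_ex_RInt. intros s. apply (ex_derive_continuous (fun s => C * exp (_ * s))). auto_derive; auto.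
    intros x Hx. rewrite <- (Rabs_pos_eq x) at 2 by lra. apply Hb.
  - rewrite (Rabs_left t Ht).
    rewrite <- opp_RInt_swap by (now apply cont_ex_RInt).
    unfold opp; simpl. rewrite Rabs_Ropp.
    eapply Rle_trans. apply abs_RInt_le; try lra. now apply cont_ex_RInt.
    replace (lam * - t) with (- lam * t) by ring.
    rewrite <- RInt_exp_neg by auto.
    apply RInt_le; try lra. now apply cont_ex_RInt.
    apply cont_ex_RInt. intros s. apply (ex_derive_continuous (fun s => C * exp (_ * s))). auto_derive; auto.
    intros x Hx. replace (- lam * x) with (lam * Rabs x). apply Hb.
    rewrite Rabs_left by lra. ring.
Qed.

Lemma ball_R (x e y : R) : ball x e y <-> Rabs (y - x) < e.
Proof. reflexivity. Qed.

Lemma cont_eps (h : R -> R) s :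
  (forall eps, 0 < eps -> exists d, 0 < d /\ forall x, Rabs (x - s) < d -> Rabs (h x - h s) < eps) ->
  continuous h s.
Proof.
  intros H. apply filterlim_locally. intros eps.
  destruct (H eps (cond_pos eps)) as [d [Hd Hx]].
  exists (mkposreal d Hd). intros y Hy. apply Hx. apply Hy.
Qed.

Lemma cont_eps_inv (h : R -> R) s : continuous h s ->
  forall eps, 0 < eps -> exists d, 0 < d /\ forall x, Rabs (x - s) < d -> Rabs (h x - h s) < eps.
Proof.
  intros H eps He. 
  destruct (proj1 (filterlim_locally (F := locally s) h (h s)) H (mkposreal eps He)) as [d Hd].
  exists d. split. apply cond_pos. intros x Hx. apply (Hd x Hx).
Qed.

Lemma cont_lip (h a b : R -> R) K s : 0 <= K ->
  (forall x, Rabs (h x - h s) <= K * (Rabs (a x - a s) + Rabs (b x - b s))) ->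
  continuous a s -> continuous b s -> continuous h s.
Proof.
  intros HK Hl Ha Hb. apply cont_eps. intros eps He.
  destruct (cont_eps_inv a s Ha (eps / (2 * (K + 1)))) as [d1 [Hd1 H1]].
  { apply Rdiv_lt_0_compat; lra. }
  destruct (cont_eps_inv b s Hb (eps / (2 * (K + 1)))) as [d2 [Hd2 H2]].
  { apply Rdiv_lt_0_compat; lra. }
  exists (Rmin d1 d2). split. now apply Rmin_pos.
  intros x Hx. 
  assert (A1 := H1 x (Rlt_le_trans _ _ _ Hx (Rmin_l _ _))).
  assert (A2 := H2 x (Rlt_le_trans _ _ _ Hx (Rmin_r _ _))).
  eapply Rle_lt_trans. apply Hl.
  assert (Rabs (a x - a s) + Rabs (b x - b s) < eps / (K+1)).
  { replace (eps / (K + 1)) with (eps / (2 * (K + 1)) + eps / (2 * (K + 1))) by (field; lra). lra. }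
  apply Rle_lt_trans with ((K+1) * (Rabs (a x - a s) + Rabs (b x - b s))).
  apply Rmult_le_compat_r. apply Rplus_le_le_0_compat; apply Rabs_pos. lra.
  apply Rmult_lt_reg_l with (/ (K+1)). apply Rinv_0_lt_compat; lra.
  rewrite <- Rmult_assoc, Rinv_l by lra. 
  replace (/ (K + 1) * eps) with (eps / (K+1)) by (unfold Rdiv; ring). lra.
Qed.

Lemma cont_unif (h : R -> R) s :
  (forall eps, 0 < eps -> exists g, continuous g s /\
      forall x, Rabs (x - s) <= 1 -> Rabs (h x - g x) <= eps) ->
  continuous h s.
Proof.
  intros H. apply cont_eps. intros eps He.
  destruct (H (eps/3)) as [g [Hg Hhg]]. lra.
  destruct (cont_eps_inv g s Hg (eps/3)) as [d [Hd Hx]]. lra.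
  exists (Rmin d 1). split. apply Rmin_pos; lra.
  intros x Hx'.
  assert (Hd' : Rabs (x - s) < d) by (eapply Rlt_le_trans; [apply Hx'|apply Rmin_l]).
  assert (H1 : Rabs (x - s) <= 1) by (left; eapply Rlt_le_trans; [apply Hx'|apply Rmin_r]).
  assert (A1 := Hhg x H1). assert (A2 := Hhg s). 
  replace (s - s) with 0 in A2 by ring. rewrite Rabs_R0 in A2. specialize (A2 ltac:(lra)).
  assert (A3 := Hx x Hd').
  replace (h x - h s) with ((h x - g x) + (g x - g s) - (h s - g s)) by ring.
  eapply Rle_lt_trans. apply Rabs_triang. 
  eapply Rle_lt_trans. apply Rplus_le_compat_r. apply Rabs_triang.
  rewrite Rabs_Ropp. lra.
Qed.

Lemma cauchy_lim (u e : nat -> R) : is_lim_seq e 0 ->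
  (forall n m, (n <= m)%nat -> Rabs (u m - u n) <= e n) ->
  is_lim_seq u (real (Lim_seq u)) /\ forall n, Rabs (real (Lim_seq u) - u n) <= e n.
Proof.
  intros He Hc.
  assert (Hex : ex_finite_lim_seq u).
  { apply ex_lim_seq_cauchy_corr. intros eps.
    destruct (proj2 (is_lim_seq_spec e 0) He eps) as [N HN].
    exists N. intros n m Hn Hm.
    assert (HeN : forall k, (N <= k)%nat -> e k < eps).
    { intros k Hk. specialize (HN k Hk). rewrite Rminus_0_r in HN.
      eapply Rle_lt_trans. apply Rle_abs. exact HN. }
    destruct (Nat.le_ge_cases n m) as [Hnm|Hnm].
    - rewrite Rabs_minus_sym. eapply Rle_lt_trans. apply Hc; auto. auto.
    - eapply Rle_lt_trans. apply Hc; auto. auto. }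
  destruct Hex as [l Hl].
  rewrite (is_lim_seq_unique _ _ Hl). simpl. split; auto.
  intros n.
  assert (Hl2 : is_lim_seq (fun m => Rabs (u (m + n)%nat - u n)) (Rabs (l - u n))).
  { apply (is_lim_seq_abs _ (Finite (l - u n))).
    apply (is_lim_seq_minus _ _ l (u n)). apply (is_lim_seq_incr_n u n l). auto.
    apply is_lim_seq_const. unfold is_Rbar_minus, is_Rbar_plus. simpl. reflexivity. }
  assert (Hle := is_lim_seq_le _ (fun _ => e n) _ _ (fun m => Hc n (m + n)%nat ltac:(lia)) Hl2 (is_lim_seq_const _)).
  simpl in Hle. exact Hle.
Qed.

Lemma derive_cRInt (f : R -> R) c t : (forall s, continuous f s) ->
  is_derive (fun t => c + RInt f 0 t) t (f t).
Proof.
  intros H.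
  assert (H1 := cont_is_derive_RInt f 0 t H).
  assert (H2 := is_derive_plus (fun _ => c) (fun t => RInt f 0 t) t 0 (f t) (is_derive_const c t) H1).
  unfold plus, zero in H2; simpl in H2. rewrite Rplus_0_l in H2. exact H2.
Qed.

Lemma cont_cRInt (f : R -> R) c t : (forall s, continuous f s) ->
  continuous (fun t => c + RInt f 0 t) t.
Proof.
  intros H. apply (@ex_derive_continuous R_AbsRing R_NormedModule). eexists. apply derive_cRInt. exact H.
Qed.

Lemma exp_ge1 x : 0 <= x -> 1 <= exp x.
Proof. intros H. rewrite <- exp_0. destruct H. left; apply exp_increasing; auto. subst; lra. Qed.

Lemma RInt_minus_R (f g : R -> R) a b : (forall s, continuous f s) -> (forall s, continuous g s) ->
  RInt (fun s => f s - g s) a b = RInt f a b - RInt g a b.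
Proof. intros Hf Hg. apply (RInt_minus (V := R_CompleteNormedModule)); apply cont_ex_RInt; auto. Qed.

Lemma exp_mono x y : x <= y -> exp x <= exp y.
Proof. intros [H|H]. left; apply exp_increasing; auto. subst; lra. Qed.

Lemma le_half x y c : (forall n, x <= y + c * (/2)^n) -> x <= y.
Proof.
  intros H. destruct (Rle_or_lt x y) as [|Hxy]; auto. exfalso.
  assert (Hl : is_lim_seq (fun n => c * (/2)^n) 0).
  { replace (Finite 0) with (Rbar_mult c 0) by (simpl; f_equal; ring).
    apply is_lim_seq_scal_l. apply is_lim_seq_geom. rewrite Rabs_pos_eq; lra. }
  destruct (proj2 (is_lim_seq_spec _ 0) Hl (mkposreal (x - y) ltac:(lra))) as [N HN].
  specialize (HN N (le_n N)). specialize (H N). simpl in HN. rewrite Rminus_0_r in HN.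
  assert (Hb := Rle_abs (c * (/2)^N)). lra.
Qed.

Lemma eq_half x y c : (forall n, Rabs (x - y) <= c * (/2)^n) -> x = y.
Proof.
  intros H. assert (Rabs (x - y) <= 0). { apply le_half with c. intros n. rewrite Rplus_0_l. apply H. }
  assert (0 <= Rabs (x - y)) by apply Rabs_pos.
  assert (Rabs (x - y) = 0) by lra. 
  destruct (Req_dec (x - y) 0). lra. exfalso. apply (Rabs_no_R0 (x - y)); auto.
Qed.

Section Picard.
Variable F : R -> R -> R.
Variable L : R.
Hypothesis HL : 1 <= L.
Hypothesis Flip : forall a b c d, Rabs (F a b - F c d) <= L * (Rabs (a - c) + Rabs (b - d)).

Definition lam := 4 * L.
Lemma lam_pos : 0 < lam. Proof. unfold lam; lra. Qed.

Lemma F_cont (a b : R -> R) s : continuous a s -> continuous b s ->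
  continuous (fun x => F (a x) (b x)) s.
Proof. intros Ha Hb. apply (cont_lip _ a b L); auto. lra. Qed.

Fixpoint pic (z0 v0 : R) (n : nat) : (R -> R) * (R -> R) :=
  match n with
  | O => (fun _ => z0, fun _ => v0)
  | S k => let zv := pic z0 v0 k in
      (fun t => z0 + RInt (snd zv) 0 t,
       fun t => v0 + RInt (fun s => F (fst zv s) (snd zv s)) 0 t)
  end.

Lemma pic_cont z0 v0 n : (forall t, continuous (fst (pic z0 v0 n)) t) /\
                         (forall t, continuous (snd (pic z0 v0 n)) t).
Proof.
  induction n as [|n [IH1 IH2]]; simpl.
  - split; intros; apply continuous_const.
  - split; intros t; apply cont_cRInt; auto.
    intros s; apply F_cont; auto.
Qed.

Lemma step_bound (z v z' v' : R -> R) a b a' b' C t :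
  0 <= C ->
  (forall s, continuous z s) -> (forall s, continuous v s) ->
  (forall s, continuous z' s) -> (forall s, continuous v' s) ->
  (forall s, Rabs (z s - z' s) + Rabs (v s - v' s) <= C * exp (lam * Rabs s)) ->
  Rabs ((a + RInt v 0 t) - (a' + RInt v' 0 t)) +
  Rabs ((b + RInt (fun s => F (z s) (v s)) 0 t) - (b' + RInt (fun s => F (z' s) (v' s)) 0 t))
  <= Rabs (a - a') + Rabs (b - b') + C * (exp (lam * Rabs t) - 1) / 2.
Proof.
  intros HC Hz Hv Hz' Hv' Hb.
  assert (HF : forall s, continuous (fun x => F (z x) (v x)) s) by (intros; apply F_cont; auto).
  assert (HF' : forall s, continuous (fun x => F (z' x) (v' x)) s) by (intros; apply F_cont; auto).
  assert (E1 : RInt v 0 t - RInt v' 0 t = RInt (fun s => v s - v' s) 0 t).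
  { symmetry. apply (RInt_minus (V := R_CompleteNormedModule)); apply cont_ex_RInt; auto. }
  assert (E2 : RInt (fun s => F (z s) (v s)) 0 t - RInt (fun s => F (z' s) (v' s)) 0 t
           = RInt (fun s => F (z s) (v s) - F (z' s) (v' s)) 0 t).
  { symmetry. apply (RInt_minus (V := R_CompleteNormedModule)); apply cont_ex_RInt; auto. }
  assert (B1 : Rabs (RInt (fun s => v s - v' s) 0 t) <= C * (exp (lam * Rabs t) - 1) / lam).
  { apply RInt_exp_bound. apply lam_pos.
    intros s. apply (continuous_minus (V := R_NormedModule)); auto.
    intros s. specialize (Hb s). assert (0 <= Rabs (z s - z' s)) by apply Rabs_pos. lra. }
  assert (B2 : Rabs (RInt (fun s => F (z s) (v s) - F (z' s) (v' s)) 0 t)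
               <= (L * C) * (exp (lam * Rabs t) - 1) / lam).
  { apply RInt_exp_bound. apply lam_pos.
    intros s. apply (continuous_minus (V := R_NormedModule)); auto.
    intros s. eapply Rle_trans. apply Flip. rewrite Rmult_assoc.
    apply Rmult_le_compat_l. lra. apply Hb. }
  assert (Hex : 0 <= exp (lam * Rabs t) - 1).
  { assert (1 <= exp (lam * Rabs t)); [|lra]. apply exp_ge1.
    apply Rmult_le_pos. left; apply lam_pos. apply Rabs_pos. }
  replace (a + RInt v 0 t - (a' + RInt v' 0 t)) with ((a - a') + (RInt v 0 t - RInt v' 0 t)) by ring.
  replace (b + RInt (fun s => F (z s) (v s)) 0 t - (b' + RInt (fun s => F (z' s) (v' s)) 0 t))
    with ((b - b') + (RInt (fun s => F (z s) (v s)) 0 t - RInt (fun s => F (z' s) (v' s)) 0 t)) by ring.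
  rewrite E1, E2.
  assert (T1 := Rabs_triang (a - a') (RInt (fun s => v s - v' s) 0 t)).
  assert (T2 := Rabs_triang (b - b') (RInt (fun s => F (z s) (v s) - F (z' s) (v' s)) 0 t)).
  assert (C * (exp (lam * Rabs t) - 1) / lam + L * C * (exp (lam * Rabs t) - 1) / lam
          <= C * (exp (lam * Rabs t) - 1) / 2).
  { unfold lam. apply Rmult_le_reg_r with (4 * L). lra.
    field_simplify; try lra. 
    assert (0 <= C * (exp (4 * L * Rabs t) - 1)) by (apply Rmult_le_pos; unfold lam in Hex; lra).
    nra. }
  lra.
Qed.


Lemma pic_fst_S z0 v0 n t : fst (pic z0 v0 (S n)) t = z0 + RInt (snd (pic z0 v0 n)) 0 t.
Proof. reflexivity. Qed.
Lemma pic_snd_S z0 v0 n t : snd (pic z0 v0 (S n)) t =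
  v0 + RInt (fun s => F (fst (pic z0 v0 n) s) (snd (pic z0 v0 n) s)) 0 t.
Proof. reflexivity. Qed.

Lemma elam_ge1 t : 1 <= exp (lam * Rabs t).
Proof. apply exp_ge1. apply Rmult_le_pos. left; apply lam_pos. apply Rabs_pos. Qed.

Definition K0 z0 v0 := (Rabs v0 + Rabs (F z0 v0)) / lam.

Lemma K0_pos z0 v0 : 0 <= K0 z0 v0.
Proof. unfold K0. apply Rmult_le_pos. assert (0 <= Rabs v0) by apply Rabs_pos.
  assert (0 <= Rabs (F z0 v0)) by apply Rabs_pos. lra. left; apply Rinv_0_lt_compat, lam_pos. Qed.

Lemma pic_diff z0 v0 n t :
  Rabs (fst (pic z0 v0 (S n)) t - fst (pic z0 v0 n) t) +
  Rabs (snd (pic z0 v0 (S n)) t - snd (pic z0 v0 n) t)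
  <= K0 z0 v0 * (/2)^n * exp (lam * Rabs t).
Proof.
  revert t. induction n as [|n IH]; intros t.
  - rewrite pic_fst_S, pic_snd_S.
    change (snd (pic z0 v0 0)) with (fun _ : R => v0).
    change (fst (pic z0 v0 0)) with (fun _ : R => z0). cbv beta. simpl pow.
    assert (E1 : forall a x : R, a + x - a = x) by (intros; ring). rewrite !E1.
    assert (B1 : Rabs (RInt (fun _ : R => v0) 0 t) <= Rabs v0 * (exp (lam * Rabs t) - 1) / lam).
    { apply RInt_exp_bound. apply lam_pos. intros; apply continuous_const.
      intros s. assert (H := elam_ge1 s). assert (0 <= Rabs v0) by apply Rabs_pos.
      rewrite <- (Rmult_1_r (Rabs v0)) at 1. apply Rmult_le_compat_l; lra. }
    assert (B2 : Rabs (RInt (fun _ : R => F z0 v0) 0 t) <= Rabs (F z0 v0) * (exp (lam * Rabs t) - 1) / lam).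
    { apply RInt_exp_bound. apply lam_pos. intros; apply continuous_const.
      intros s. assert (H := elam_ge1 s). assert (0 <= Rabs (F z0 v0)) by apply Rabs_pos.
      rewrite <- (Rmult_1_r (Rabs (F z0 v0))) at 1. apply Rmult_le_compat_l; lra. }
    unfold K0. assert (Hl := lam_pos).
    eapply Rle_trans. apply Rplus_le_compat; [apply B1|apply B2].
    assert (0 <= Rabs v0) by apply Rabs_pos. assert (0 <= Rabs (F z0 v0)) by apply Rabs_pos.
    apply Rmult_le_reg_r with lam; auto. field_simplify; try lra; nra.
  - rewrite (pic_fst_S _ _ (S n)), (pic_snd_S _ _ (S n)), (pic_fst_S _ _ n), (pic_snd_S _ _ n).
    destruct (pic_cont z0 v0 n) as [Hc1 Hc2]. destruct (pic_cont z0 v0 (S n)) as [Hc3 Hc4].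
    assert (HC : 0 <= K0 z0 v0 * (/2)^n) by (apply Rmult_le_pos; [apply K0_pos|apply pow_le; lra]).
    eapply Rle_trans. apply step_bound with (C := K0 z0 v0 * (/2)^n); try assumption.
    rewrite !Rminus_diag, Rabs_R0. simpl. assert (H := elam_ge1 t).
    assert (0 <= K0 z0 v0 * (/2)^n) by (apply Rmult_le_pos; [apply K0_pos|apply pow_le; lra]).
    assert (K0 z0 v0 * (/ 2 * (/ 2) ^ n) = K0 z0 v0 * (/2)^n / 2) as -> by field.
    nra.
Qed.

Lemma pic_cauchy z0 v0 n j t :
  Rabs (fst (pic z0 v0 (j + n)) t - fst (pic z0 v0 n) t) +
  Rabs (snd (pic z0 v0 (j + n)) t - snd (pic z0 v0 n) t)
  <= 2 * K0 z0 v0 * ((/2)^n - (/2)^(j+n)) * exp (lam * Rabs t).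
Proof.
  induction j as [|j IH].
  - simpl. rewrite !Rminus_diag, Rabs_R0. lra.
  - assert (D := pic_diff z0 v0 (j + n) t). replace (S j + n)%nat with (S (j + n)) by lia.
    assert (T1 := Rabs_triang (fst (pic z0 v0 (S (j + n))) t - fst (pic z0 v0 (j + n)) t)
                              (fst (pic z0 v0 (j + n)) t - fst (pic z0 v0 n) t)).
    assert (T2 := Rabs_triang (snd (pic z0 v0 (S (j + n))) t - snd (pic z0 v0 (j + n)) t)
                              (snd (pic z0 v0 (j + n)) t - snd (pic z0 v0 n) t)).
    replace (fst (pic z0 v0 (S (j + n))) t - fst (pic z0 v0 (j + n)) t +
             (fst (pic z0 v0 (j + n)) t - fst (pic z0 v0 n) t))
      with (fst (pic z0 v0 (S (j + n))) t - fst (pic z0 v0 n) t) in T1 by ring.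
    replace (snd (pic z0 v0 (S (j + n))) t - snd (pic z0 v0 (j + n)) t +
             (snd (pic z0 v0 (j + n)) t - snd (pic z0 v0 n) t))
      with (snd (pic z0 v0 (S (j + n))) t - snd (pic z0 v0 n) t) in T2 by ring.
    simpl pow. 
    assert (2 * K0 z0 v0 * ((/ 2) ^ n - (/ 2) ^ (j + n)) * exp (lam * Rabs t) +
            K0 z0 v0 * (/ 2) ^ (j + n) * exp (lam * Rabs t) =
            2 * K0 z0 v0 * ((/ 2) ^ n - / 2 * (/ 2) ^ (j + n)) * exp (lam * Rabs t)) by field.
    lra.
Qed.

Definition Zl z0 v0 t := real (Lim_seq (fun n => fst (pic z0 v0 n) t)).
Definition Vl z0 v0 t := real (Lim_seq (fun n => snd (pic z0 v0 n) t)).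

Lemma half_pow_lim (c : R) : is_lim_seq (fun n => c * (/2)^n) 0.
Proof.
  replace (Finite 0) with (Rbar_mult c 0) by (simpl; f_equal; ring).
  apply is_lim_seq_scal_l. apply is_lim_seq_geom. rewrite Rabs_pos_eq; lra.
Qed.

Lemma pic_lim z0 v0 t :
  is_lim_seq (fun n => fst (pic z0 v0 n) t) (Zl z0 v0 t) /\
  is_lim_seq (fun n => snd (pic z0 v0 n) t) (Vl z0 v0 t) /\
  forall n, Rabs (Zl z0 v0 t - fst (pic z0 v0 n) t) <= 2 * K0 z0 v0 * exp (lam * Rabs t) * (/2)^n /\
            Rabs (Vl z0 v0 t - snd (pic z0 v0 n) t) <= 2 * K0 z0 v0 * exp (lam * Rabs t) * (/2)^n.
Proof.
  assert (Hc : forall n m, (n <= m)%nat ->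
     Rabs (fst (pic z0 v0 m) t - fst (pic z0 v0 n) t) <= 2 * K0 z0 v0 * exp (lam * Rabs t) * (/2)^n /\
     Rabs (snd (pic z0 v0 m) t - snd (pic z0 v0 n) t) <= 2 * K0 z0 v0 * exp (lam * Rabs t) * (/2)^n).
  { intros n m Hnm. replace m with ((m - n) + n)%nat by lia.
    assert (H := pic_cauchy z0 v0 n (m - n) t).
    assert (0 <= (/2)^(m - n + n)) by (apply pow_le; lra).
    assert (0 <= K0 z0 v0) by apply K0_pos. assert (He1 := elam_ge1 t).
    assert (0 <= Rabs (fst (pic z0 v0 (m - n + n)) t - fst (pic z0 v0 n) t)) by apply Rabs_pos.
    assert (0 <= Rabs (snd (pic z0 v0 (m - n + n)) t - snd (pic z0 v0 n) t)) by apply Rabs_pos.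
    assert (2 * K0 z0 v0 * ((/ 2) ^ n - (/ 2) ^ (m - n + n)) * exp (lam * Rabs t) <=
            2 * K0 z0 v0 * exp (lam * Rabs t) * (/ 2) ^ n).
    { assert (0 <= 2 * K0 z0 v0 * (/ 2) ^ (m - n + n) * exp (lam * Rabs t)).
      { apply Rmult_le_pos; [|lra]. apply Rmult_le_pos; lra. }
      nra. }
    lra. }
  destruct (cauchy_lim (fun n => fst (pic z0 v0 n) t) (fun n => 2 * K0 z0 v0 * exp (lam * Rabs t) * (/2)^n))
    as [H1 H2]. apply half_pow_lim. intros; apply Hc; auto.
  destruct (cauchy_lim (fun n => snd (pic z0 v0 n) t) (fun n => 2 * K0 z0 v0 * exp (lam * Rabs t) * (/2)^n))
    as [H3 H4]. apply half_pow_lim. intros; apply Hc; auto.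
  unfold Zl, Vl. repeat split; auto; apply H2 || apply H4.
Qed.


Lemma pic_lim_cont z0 v0 t : continuous (Zl z0 v0) t /\ continuous (Vl z0 v0) t.
Proof.
  set (c := 2 * K0 z0 v0 * exp (lam * (Rabs t + 1))).
  assert (Hc : forall x n, Rabs (x - t) <= 1 ->
     Rabs (Zl z0 v0 x - fst (pic z0 v0 n) x) <= c * (/2)^n /\
     Rabs (Vl z0 v0 x - snd (pic z0 v0 n) x) <= c * (/2)^n).
  { intros x n Hx. destruct (pic_lim z0 v0 x) as [_ [_ H]]. destruct (H n) as [H1 H2].
    assert (E : 2 * K0 z0 v0 * exp (lam * Rabs x) * (/ 2) ^ n <= c * (/2)^n).
    { unfold c. apply Rmult_le_compat_r. apply pow_le; lra.
      apply Rmult_le_compat_l. assert (H0 := K0_pos z0 v0); lra.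
      apply exp_mono. apply Rmult_le_compat_l. left; apply lam_pos.
      assert (Rabs x - Rabs t <= Rabs (x - t)) by apply Rabs_triang_inv. lra. }
    split; lra. }
  assert (Hn : forall eps, 0 < eps -> exists n, c * (/2)^n <= eps).
  { intros eps He. 
    assert (Hl : is_lim_seq (fun n => c * (/2)^n) 0).
    { replace (Finite 0) with (Rbar_mult c 0) by (simpl; f_equal; ring).
      apply is_lim_seq_scal_l. apply is_lim_seq_geom. rewrite Rabs_pos_eq; lra. }
    destruct (proj2 (is_lim_seq_spec _ 0) Hl (mkposreal eps He)) as [N HN].
    exists N. specialize (HN N (le_n N)). simpl in HN. rewrite Rminus_0_r in HN.
    assert (Hb := Rle_abs (c * (/2)^N)). lra. }
  split; apply cont_unif; intros eps He; destruct (Hn eps He) as [n Hn'];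
    destruct (pic_cont z0 v0 n) as [P1 P2].
  - exists (fst (pic z0 v0 n)). split; auto. intros x Hx. destruct (Hc x n Hx). lra.
  - exists (snd (pic z0 v0 n)). split; auto. intros x Hx. destruct (Hc x n Hx). lra.
Qed.

Lemma pic_int z0 v0 t :
  Zl z0 v0 t = z0 + RInt (Vl z0 v0) 0 t /\
  Vl z0 v0 t = v0 + RInt (fun s => F (Zl z0 v0 s) (Vl z0 v0 s)) 0 t.
Proof.
  assert (CZ : forall s, continuous (Zl z0 v0) s) by (intros; apply pic_lim_cont).
  assert (CV : forall s, continuous (Vl z0 v0) s) by (intros; apply pic_lim_cont).
  assert (CF : forall s, continuous (fun x => F (Zl z0 v0 x) (Vl z0 v0 x)) s) by (intros; apply F_cont; auto).
  set (K := 2 * K0 z0 v0). assert (HK : 0 <= K) by (unfold K; assert (H := K0_pos z0 v0); lra).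
  assert (He := elam_ge1 t). assert (Hl := lam_pos).
  split.
  - apply eq_half with (K * exp (lam * Rabs t) + K * exp (lam * Rabs t) / lam).
    intros n. destruct (pic_lim z0 v0 t) as [_ [_ H]]. destruct (H (S n)) as [H1 _].
    rewrite pic_fst_S in H1.
    destruct (pic_cont z0 v0 n) as [P1 P2].
    assert (B : Rabs (RInt (fun s => snd (pic z0 v0 n) s - Vl z0 v0 s) 0 t) <= (K * (/2)^n) * (exp (lam * Rabs t) - 1) / lam).
    { apply RInt_exp_bound; auto. intros s. apply (continuous_minus (V := R_NormedModule)); auto.
      intros s. destruct (pic_lim z0 v0 s) as [_ [_ H']]. destruct (H' n) as [_ H2].
      rewrite Rabs_minus_sym. unfold K in *. lra. }
    rewrite RInt_minus_R in B by auto.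
    set (I1 := RInt (snd (pic z0 v0 n)) 0 t) in *.
    set (I2 := RInt (Vl z0 v0) 0 t) in *.
    replace (Zl z0 v0 t - (z0 + I2)) with ((Zl z0 v0 t - (z0 + I1)) + (I1 - I2)) by ring.
    eapply Rle_trans. apply Rabs_triang. simpl pow in H1.
    assert (0 <= (/2)^n) by (apply pow_le; lra).
    assert (K * exp (lam * Rabs t) * (/ 2 * (/ 2) ^ n) <= K * exp (lam * Rabs t) * (/2)^n).
    { rewrite <- (Rmult_1_l ((/2)^n)) at 2. apply Rmult_le_compat_l. apply Rmult_le_pos; lra.
      apply Rmult_le_compat_r; lra. }
    assert (K * (/ 2) ^ n * (exp (lam * Rabs t) - 1) / lam <= K * exp (lam * Rabs t) / lam * (/2)^n).
    { unfold Rdiv. replace (K * (/ 2) ^ n * (exp (lam * Rabs t) - 1) * / lam) with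
        ((K * / lam * (/ 2) ^ n) * (exp (lam * Rabs t) - 1)) by ring.
      replace (K * exp (lam * Rabs t) * / lam * (/ 2) ^ n) with
        ((K * / lam * (/ 2) ^ n) * exp (lam * Rabs t)) by ring.
      apply Rmult_le_compat_l. apply Rmult_le_pos; auto. apply Rmult_le_pos; [auto|left; apply Rinv_0_lt_compat; auto].
      lra. }
    unfold K in *. lra.
  - apply eq_half with (K * exp (lam * Rabs t) + 2 * L * K * exp (lam * Rabs t) / lam).
    intros n. destruct (pic_lim z0 v0 t) as [_ [_ H]]. destruct (H (S n)) as [_ H1].
    rewrite pic_snd_S in H1.
    destruct (pic_cont z0 v0 n) as [P1 P2].
    assert (CFn : forall s, continuous (fun x => F (fst (pic z0 v0 n) x) (snd (pic z0 v0 n) x)) s) by (intros; apply F_cont; auto).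
    assert (B : Rabs (RInt (fun s => F (fst (pic z0 v0 n) s) (snd (pic z0 v0 n) s) - F (Zl z0 v0 s) (Vl z0 v0 s)) 0 t)
                <= (2 * L * K * (/2)^n) * (exp (lam * Rabs t) - 1) / lam).
    { apply RInt_exp_bound; auto. intros s. apply (continuous_minus (V := R_NormedModule)); auto.
      intros s. destruct (pic_lim z0 v0 s) as [_ [_ H']]. destruct (H' n) as [H2 H3].
      eapply Rle_trans. apply Flip. rewrite (Rabs_minus_sym (fst _ _)), (Rabs_minus_sym (snd _ _)).
      unfold K in *. 
      replace (2 * L * (2 * K0 z0 v0) * (/ 2) ^ n * exp (lam * Rabs s)) with
        (L * (2 * K0 z0 v0 * exp (lam * Rabs s) * (/ 2) ^ n + 2 * K0 z0 v0 * exp (lam * Rabs s) * (/ 2) ^ n)) by ring.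
      apply Rmult_le_compat_l; lra. }
    rewrite (RInt_minus_R (fun s => F (fst (pic z0 v0 n) s) (snd (pic z0 v0 n) s))) in B by auto.
    set (I1 := RInt (fun s => F (fst (pic z0 v0 n) s) (snd (pic z0 v0 n) s)) 0 t) in *.
    set (I2 := RInt (fun s => F (Zl z0 v0 s) (Vl z0 v0 s)) 0 t) in *.
    replace (Vl z0 v0 t - (v0 + I2)) with ((Vl z0 v0 t - (v0 + I1)) + (I1 - I2)) by ring.
    eapply Rle_trans. apply Rabs_triang. simpl pow in H1.
    assert (0 <= (/2)^n) by (apply pow_le; lra).
    assert (K * exp (lam * Rabs t) * (/ 2 * (/ 2) ^ n) <= K * exp (lam * Rabs t) * (/2)^n).
    { rewrite <- (Rmult_1_l ((/2)^n)) at 2. apply Rmult_le_compat_l. apply Rmult_le_pos; lra.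
      apply Rmult_le_compat_r; lra. }
    assert (2 * L * K * (/ 2) ^ n * (exp (lam * Rabs t) - 1) / lam <= 2 * L * K * exp (lam * Rabs t) / lam * (/2)^n).
    { unfold Rdiv. replace (2 * L * K * (/ 2) ^ n * (exp (lam * Rabs t) - 1) * / lam) with
        ((2 * L * K * / lam * (/ 2) ^ n) * (exp (lam * Rabs t) - 1)) by ring.
      replace (2 * L * K * exp (lam * Rabs t) * / lam * (/ 2) ^ n) with
        ((2 * L * K * / lam * (/ 2) ^ n) * exp (lam * Rabs t)) by ring.
      apply Rmult_le_compat_l. apply Rmult_le_pos; auto. apply Rmult_le_pos; [|left; apply Rinv_0_lt_compat; auto].
      apply Rmult_le_pos; lra. lra. }
    unfold K in *. lra.
Qed.

Lemma pic_deriv z0 v0 t :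
  is_derive (Zl z0 v0) t (Vl z0 v0 t) /\
  is_derive (Vl z0 v0) t (F (Zl z0 v0 t) (Vl z0 v0 t)).
Proof.
  assert (CZ : forall s, continuous (Zl z0 v0) s) by (intros; apply pic_lim_cont).
  assert (CV : forall s, continuous (Vl z0 v0) s) by (intros; apply pic_lim_cont).
  assert (CF : forall s, continuous (fun x => F (Zl z0 v0 x) (Vl z0 v0 x)) s) by (intros; apply F_cont; auto).
  split.
  - apply is_derive_ext with (f := fun t => z0 + RInt (Vl z0 v0) 0 t).
    intros s. symmetry. apply pic_int. apply derive_cRInt; auto.
  - apply is_derive_ext with (f := fun t => v0 + RInt (fun s => F (Zl z0 v0 s) (Vl z0 v0 s)) 0 t).
    intros s. symmetry. apply pic_int. apply (derive_cRInt (fun s => F (Zl z0 v0 s) (Vl z0 v0 s))); auto.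
Qed.

Lemma pic_dep_n z0 v0 z1 v1 n t :
  Rabs (fst (pic z0 v0 n) t - fst (pic z1 v1 n) t) + Rabs (snd (pic z0 v0 n) t - snd (pic z1 v1 n) t)
  <= (Rabs (z0 - z1) + Rabs (v0 - v1)) * exp (lam * Rabs t).
Proof.
  revert t. induction n as [|n IH]; intros t.
  - simpl. assert (H := elam_ge1 t). 
    assert (0 <= Rabs (z0 - z1) + Rabs (v0 - v1)) by (assert (0 <= Rabs (z0 - z1)) by apply Rabs_pos; assert (0 <= Rabs (v0 - v1)) by apply Rabs_pos; lra).
    rewrite <- (Rmult_1_r (Rabs (z0 - z1) + Rabs (v0 - v1))) at 1. apply Rmult_le_compat_l; lra.
  - rewrite !pic_fst_S, !pic_snd_S.
    destruct (pic_cont z0 v0 n) as [Hc1 Hc2]. destruct (pic_cont z1 v1 n) as [Hc3 Hc4].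
    assert (HC : 0 <= Rabs (z0 - z1) + Rabs (v0 - v1)) by (assert (0 <= Rabs (z0 - z1)) by apply Rabs_pos; assert (0 <= Rabs (v0 - v1)) by apply Rabs_pos; lra).
    eapply Rle_trans. apply step_bound with (C := Rabs (z0 - z1) + Rabs (v0 - v1)); try assumption.
    assert (H := elam_ge1 t). nra.
Qed.

Lemma pic_dep z0 v0 z1 v1 t :
  Rabs (Zl z0 v0 t - Zl z1 v1 t) + Rabs (Vl z0 v0 t - Vl z1 v1 t)
  <= (Rabs (z0 - z1) + Rabs (v0 - v1)) * exp (lam * Rabs t).
Proof.
  apply le_half with (2 * (2 * K0 z0 v0 * exp (lam * Rabs t)) + 2 * (2 * K0 z1 v1 * exp (lam * Rabs t))).
  intros n. assert (D := pic_dep_n z0 v0 z1 v1 n t).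
  destruct (pic_lim z0 v0 t) as [_ [_ H]]. destruct (H n) as [H1 H2].
  destruct (pic_lim z1 v1 t) as [_ [_ H']]. destruct (H' n) as [H3 H4].
  set (a := fst (pic z0 v0 n) t) in *. set (b := fst (pic z1 v1 n) t) in *.
  set (c := snd (pic z0 v0 n) t) in *. set (d := snd (pic z1 v1 n) t) in *.
  assert (T1 : Rabs (Zl z0 v0 t - Zl z1 v1 t) <= Rabs (Zl z0 v0 t - a) + Rabs (a - b) + Rabs (Zl z1 v1 t - b)).
  { replace (Zl z0 v0 t - Zl z1 v1 t) with ((Zl z0 v0 t - a) + (a - b) - (Zl z1 v1 t - b)) by ring.
    eapply Rle_trans. apply Rabs_triang. rewrite Rabs_Ropp. apply Rplus_le_compat_r. apply Rabs_triang. }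
  assert (T2 : Rabs (Vl z0 v0 t - Vl z1 v1 t) <= Rabs (Vl z0 v0 t - c) + Rabs (c - d) + Rabs (Vl z1 v1 t - d)).
  { replace (Vl z0 v0 t - Vl z1 v1 t) with ((Vl z0 v0 t - c) + (c - d) - (Vl z1 v1 t - d)) by ring.
    eapply Rle_trans. apply Rabs_triang. rewrite Rabs_Ropp. apply Rplus_le_compat_r. apply Rabs_triang. }
  lra.
Qed.

End Picard.

Lemma derive_contpt (f : R -> R) (df : R) x : is_derive f x df -> continuity_pt f x.
Proof.
  intros H. apply continuity_pt_filterlim.
  apply (@ex_derive_continuous R_AbsRing R_NormedModule). exists df. exact H.
Qed.

Lemma deriv_lower (f df : R -> R) a b m : a <= b ->
  (forall x, a <= x <= b -> is_derive f x (df x)) ->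
  (forall x, a <= x <= b -> m <= df x) -> m * (b - a) <= f b - f a.
Proof.
  intros Hab Hd Hm.
  destruct (MVT_gen f a b df) as [c [Hc E]].
  - intros x Hx. rewrite Rmin_left in Hx by lra. rewrite Rmax_right in Hx by lra. apply Hd; lra.
  - intros x Hx. rewrite Rmin_left in Hx by lra. rewrite Rmax_right in Hx by lra.
    apply derive_contpt with (df x). apply Hd; lra.
  - rewrite Rmin_left in Hc by lra. rewrite Rmax_right in Hc by lra.
    rewrite E. apply Rmult_le_compat_r. lra. apply Hm; lra.
Qed.

Lemma deriv_upper (f df : R -> R) a b m : a <= b ->
  (forall x, a <= x <= b -> is_derive f x (df x)) ->
  (forall x, a <= x <= b -> df x <= m) -> f b - f a <= m * (b - a).
Proof.
  intros Hab Hd Hm.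
  destruct (MVT_gen f a b df) as [c [Hc E]].
  - intros x Hx. rewrite Rmin_left in Hx by lra. rewrite Rmax_right in Hx by lra. apply Hd; lra.
  - intros x Hx. rewrite Rmin_left in Hx by lra. rewrite Rmax_right in Hx by lra.
    apply derive_contpt with (df x). apply Hd; lra.
  - rewrite Rmin_left in Hc by lra. rewrite Rmax_right in Hc by lra.
    rewrite E. apply Rmult_le_compat_r. lra. apply Hm; lra.
Qed.

Lemma first_hit (f : R -> R) a b : a <= b -> (forall x, continuous f x) ->
  f a < 0 -> 0 <= f b ->
  exists c, a < c <= b /\ f c = 0 /\ forall x, a <= x < c -> f x < 0.
Proof.
  intros Hab Hc Ha Hb.
  set (E := fun x => a <= x <= b /\ forall y, a <= y <= x -> f y < 0).
  assert (HE1 : bound E). { exists b. intros x [Hx _]. lra. }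
  assert (HE2 : exists x, E x). { exists a. split. lra. intros y Hy. replace y with a by lra. auto. }
  destruct (completeness E HE1 HE2) as [c [Hub Hlub]].
  assert (Hac : a <= c). { apply Hub. split. lra. intros y Hy. replace y with a by lra. auto. }
  assert (Hcb : c <= b). { apply Hlub. intros x [Hx _]. lra. }
  assert (Hbelow : forall x, a <= x < c -> f x < 0).
  { intros x Hx. destruct (Rle_or_lt c x) as [H|H]. lra.
    destruct (classic (exists e, E e /\ x < e)) as [[e [[He1 He2] He3]]|Hn].
    - apply He2. lra.
    - exfalso. assert (c <= x). { apply Hlub. intros e He. destruct (Rle_or_lt e x); auto.
        exfalso; apply Hn; exists e; auto. }
      lra. }
  assert (Hfc : f c = 0).
  { destruct (Rtotal_order (f c) 0) as [Hlt|[Heq|Hgt]]; auto; exfalso.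
    - destruct (cont_eps_inv f c (Hc c) (- f c)) as [d [Hd Hx]]. lra.
      assert (Hcb' : c < b). { destruct Hcb; auto. subst. lra. }
      assert (E (Rmin (c + d/2) b)).
      { split. split. unfold Rmin; destruct (Rle_dec (c + d/2) b); lra. apply Rmin_r.
        intros y Hy. destruct (Rlt_or_le y c). apply Hbelow; lra.
        assert (Rabs (y - c) < d). { assert (y <= c + d/2) by (eapply Rle_trans; [apply Hy|apply Rmin_l]).
          rewrite Rabs_pos_eq; lra. }
        specialize (Hx y H0). assert (Hr := Rle_abs (f y - f c)). lra. }
      assert (Rmin (c + d / 2) b <= c) by (apply Hub; auto).
      unfold Rmin in H0. destruct (Rle_dec (c + d/2) b); lra.
    - destruct (cont_eps_inv f c (Hc c) (f c)) as [d [Hd Hx]]. lra.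
      assert (Hac' : a < c). { destruct Hac; auto. subst. lra. }
      set (y := Rmax a (c - d/2)).
      assert (Hy1 : a <= y < c). { unfold y, Rmax. destruct (Rle_dec a (c - d/2)); lra. }
      assert (Hy2 : Rabs (y - c) < d). { unfold y, Rmax. destruct (Rle_dec a (c - d/2)).
        rewrite Rabs_left; lra. rewrite Rabs_left; lra. }
      specialize (Hx y Hy2). assert (Hr := Rle_abs (f c - f y)). rewrite Rabs_minus_sym in Hx.
      specialize (Hbelow y Hy1). lra. }
  exists c. split. split; auto. destruct Hac; auto. subst; lra. auto.
Qed.

Lemma pos_right (f df : R -> R) u eps : 0 < eps ->
  (forall x, is_derive f x (df x)) -> continuous df u -> 0 < df u ->
  exists u', u < u' < u + eps /\ f u < f u'.
Proof.
  intros He Hd Hc Hp.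
  destruct (cont_eps_inv df u Hc (df u / 2)) as [d [Hd0 Hx]]. lra.
  set (u' := u + Rmin eps d / 2).
  assert (Hm : 0 < Rmin eps d) by (apply Rmin_pos; lra).
  assert (Hm1 := Rmin_l eps d). assert (Hm2 := Rmin_r eps d).
  exists u'. split. unfold u'; lra.
  assert (H := deriv_lower f df u u' (df u / 2)).
  assert (df u / 2 * (u' - u) <= f u' - f u).
  { apply H. unfold u'; lra. intros; apply Hd.
    intros x Hx0. assert (Rabs (x - u) < d) by (rewrite Rabs_pos_eq; unfold u' in Hx0; lra).
    specialize (Hx x H0). assert (Hr := Rle_abs (df u - df x)). rewrite Rabs_minus_sym in Hx. lra. }
  assert (0 < df u / 2 * (u' - u)) by (apply Rmult_lt_0_compat; unfold u'; lra). lra.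
Qed.

Ltac dabs := repeat match goal with
  | |- context [Rle_dec ?x ?y] => destruct (Rle_dec x y) as [?|?%Rnot_le_lt]
  | H : context [Rle_dec ?x ?y] |- _ => destruct (Rle_dec x y) as [?|?%Rnot_le_lt]
  | |- context [Rcase_abs ?x] => destruct (Rcase_abs x)
  | H : context [Rcase_abs ?x] |- _ => destruct (Rcase_abs x)
  end.

Definition clip (z : R) := Rmax (-6) (Rmin z 6).

Lemma clip_lip a b : Rabs (clip a - clip b) <= Rabs (a - b).
Proof.
  unfold clip, Rmax, Rmin.
  unfold Rabs; dabs; lra.
Qed.

Lemma clip_bnd a : Rabs (clip a) <= 6.
Proof. unfold clip, Rmax, Rmin.
  unfold Rabs; dabs; lra. Qed.

Lemma clip_id a : Rabs a <= 6 -> clip a = a.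
Proof. intros H. unfold clip, Rmax, Rmin. unfold Rabs in H; dabs; lra. Qed.

Section Conc.
Variable n : R.
Hypothesis Hn : 5 <= n.

Definition Fc z v := (n - 4) * v + (2 * n - 4) * z - (n - 1) / 2 * (clip z) ^ 2.
Definition Lc := (n - 4) + (2 * n - 4) + 6 * (n - 1) + 1.

Lemma Lc_ge1 : 1 <= Lc. Proof. unfold Lc; lra. Qed.

Lemma Fc_lip a b c d : Rabs (Fc a b - Fc c d) <= Lc * (Rabs (a - c) + Rabs (b - d)).
Proof.
  unfold Fc, Lc.
  assert (H1 : Rabs (clip a ^ 2 - clip c ^ 2) <= 12 * Rabs (a - c)).
  { replace (clip a ^ 2 - clip c ^ 2) with ((clip a - clip c) * (clip a + clip c)) by ring.
    rewrite Rabs_mult. assert (Rabs (clip a + clip c) <= 12).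
    { eapply Rle_trans. apply Rabs_triang. assert (H := clip_bnd a). assert (H' := clip_bnd c). lra. }
    assert (H2 := clip_lip a c). assert (0 <= Rabs (clip a - clip c)) by apply Rabs_pos.
    rewrite Rmult_comm. 
    apply Rle_trans with (12 * Rabs (clip a - clip c)). apply Rmult_le_compat_r; lra. lra. }
  replace ((n - 4) * b + (2 * n - 4) * a - (n - 1) / 2 * clip a ^ 2 -
           ((n - 4) * d + (2 * n - 4) * c - (n - 1) / 2 * clip c ^ 2))
    with ((n - 4) * (b - d) + (2 * n - 4) * (a - c) - (n - 1) / 2 * (clip a ^ 2 - clip c ^ 2)) by ring.
  eapply Rle_trans. apply Rabs_triang. eapply Rle_trans. apply Rplus_le_compat_r. apply Rabs_triang.
  rewrite Rabs_Ropp, !Rabs_mult. rewrite (Rabs_pos_eq (n-4)) by lra.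
  rewrite (Rabs_pos_eq (2*n-4)) by lra. rewrite (Rabs_pos_eq ((n-1)/2)) by lra.
  assert (0 <= Rabs (a - c)) by apply Rabs_pos. assert (0 <= Rabs (b - d)) by apply Rabs_pos.
  assert ((n - 1) / 2 * Rabs (clip a ^ 2 - clip c ^ 2) <= (n - 1) / 2 * (12 * Rabs (a - c))).
  { apply Rmult_le_compat_l; lra. }
  nra.
Qed.

Definition Z s := Zl Fc 1 (- s).
Definition V s := Vl Fc 1 (- s).

Lemma ZV_deriv s t : is_derive (Z s) t (V s t) /\ is_derive (V s) t (Fc (Z s t) (V s t)).
Proof. apply (pic_deriv Fc Lc Lc_ge1 Fc_lip). Qed.

Lemma ZV_cont s t : continuous (Z s) t /\ continuous (V s) t.
Proof. apply (pic_lim_cont Fc Lc Lc_ge1 Fc_lip). Qed.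

Lemma ZV_init s : Z s 0 = 1 /\ V s 0 = - s.
Proof.
  destruct (pic_int Fc Lc Lc_ge1 Fc_lip 1 (-s) 0) as [H1 H2]. unfold Z, V.
  rewrite H1, H2, !RInt_point. unfold zero; simpl. split; ring.
Qed.

Definition LL := lam Lc.
Lemma LL_pos : 0 < LL. Proof. unfold LL, lam. assert (H := Lc_ge1). lra. Qed.

Lemma ZV_dep s1 s2 t :
  Rabs (Z s1 t - Z s2 t) + Rabs (V s1 t - V s2 t) <= Rabs (s1 - s2) * exp (LL * Rabs t).
Proof.
  eapply Rle_trans. apply (pic_dep Fc Lc Lc_ge1 Fc_lip).
  replace (1 - 1) with 0 by ring. rewrite Rabs_R0, Rplus_0_l.
  replace (- s1 - - s2) with (- (s1 - s2)) by ring. rewrite Rabs_Ropp. apply Rle_refl.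
Qed.

Definition Vp z := - (2 * n - 4) * z ^ 2 / 2 + (n - 1) / 2 * z ^ 3 / 3.
Definition En s t := (V s t) ^ 2 / 2 + Vp (Z s t).

Lemma En_deriv s t : Rabs (Z s t) <= 6 -> is_derive (En s) t ((n - 4) * (V s t) ^ 2).
Proof.
  intros Hb. destruct (ZV_deriv s t) as [HZ HV].
  unfold En, Vp. auto_derive.
  - repeat split; eexists; eauto.
  - replace (Derive (fun x => V s x) t) with (Fc (Z s t) (V s t)) by (symmetry; apply is_derive_unique; exact HV).
    replace (Derive (fun x => Z s x) t) with (V s t) by (symmetry; apply is_derive_unique; exact HZ).
    unfold Fc. rewrite clip_id by auto. field.
Qed.

End Conc.

Lemma cont_pt (f : R -> R) x : continuous f x -> continuity_pt f x.
Proof. intros H; apply continuity_pt_filterlim; exact H. Qed.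

Section Shoot.
Variable n : R.
Hypothesis Hn : 5 <= n.

Notation Z := (Z n). Notation V := (V n). Notation Fc := (Fc n).

Lemma Zc s t : continuous (Z s) t. Proof. exact (proj1 (ZV_cont n Hn s t)). Qed.
Lemma Vc s t : continuous (V s) t. Proof. exact (proj2 (ZV_cont n Hn s t)). Qed.

Lemma Fc_cont s t : continuous (fun u => Fc (Z s u) (V s u)) t.
Proof. exact (F_cont Fc (Lc n) (Lc_ge1 n Hn) (Fc_lip n Hn) (Z s) (V s) t (Zc s t) (Vc s t)). Qed.

Definition Pset s := exists t, 0 <= t /\ 0 < V s t /\ forall u, 0 <= u <= t -> 0 < Z s u.
Definition Qset s := exists t, 0 <= t /\ Z s t < 0 /\ forall u, 0 <= u <= t -> V s u < 0.

Lemma PQ_disj s : Pset s -> Qset s -> False.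
Proof.
  intros [t1 [H1 [H2 H3]]] [t2 [H4 [H5 H6]]].
  destruct (Rle_or_lt t1 t2).
  - specialize (H6 t1 ltac:(lra)). lra.
  - specialize (H3 t2 ltac:(lra)). lra.
Qed.

Lemma dep_bound s s' u t : 0 <= u <= t ->
  Rabs (Z s' u - Z s u) <= Rabs (s' - s) * exp (LL n * t) /\
  Rabs (V s' u - V s u) <= Rabs (s' - s) * exp (LL n * t).
Proof.
  intros Hu. assert (H := ZV_dep n Hn s' s u).
  assert (exp (LL n * Rabs u) <= exp (LL n * t)).
  { apply exp_mono. apply Rmult_le_compat_l. left; apply LL_pos; auto. rewrite Rabs_pos_eq; lra. }
  assert (0 <= Rabs (s' - s)) by apply Rabs_pos.
  assert (Rabs (s' - s) * exp (LL n * Rabs u) <= Rabs (s' - s) * exp (LL n * t)) by (apply Rmult_le_compat_l; lra).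
  assert (0 <= Rabs (Z s' u - Z s u)) by apply Rabs_pos.
  assert (0 <= Rabs (V s' u - V s u)) by apply Rabs_pos.
  split; lra.
Qed.

Lemma P_open s : Pset s -> exists eta, 0 < eta /\ forall s', Rabs (s' - s) < eta -> Pset s'.
Proof.
  intros [t [Ht [Hv Hz]]].
  destruct (continuity_ab_min (Z s) 0 t Ht) as [mx [Hmx Hmx2]].
  { intros c _. apply cont_pt, Zc. }
  set (m := Rmin (Z s mx) (V s t)).
  assert (Hm : 0 < m). { apply Rmin_pos; auto. }
  assert (He : 0 < exp (LL n * t)) by apply exp_pos.
  exists (m / (2 * exp (LL n * t))). split. apply Rdiv_lt_0_compat; lra.
  intros s' Hs'.
  assert (Hb : Rabs (s' - s) * exp (LL n * t) < m / 2).
  { apply Rmult_lt_compat_r with (r := exp (LL n * t)) in Hs'; auto.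
    replace (m / (2 * exp (LL n * t)) * exp (LL n * t)) with (m / 2) in Hs' by (field; lra). lra. }
  exists t. split; auto. split.
  - destruct (dep_bound s s' t t) as [_ H2]. lra.
    assert (Hr := Rle_abs (V s t - V s' t)). rewrite Rabs_minus_sym in H2.
    assert (m <= V s t) by apply Rmin_r. lra.
  - intros u Hu. destruct (dep_bound s s' u t Hu) as [H1 _].
    assert (Hr := Rle_abs (Z s u - Z s' u)). rewrite Rabs_minus_sym in H1.
    assert (m <= Z s mx) by apply Rmin_l. specialize (Hmx u Hu). lra.
Qed.

Lemma Q_open s : Qset s -> exists eta, 0 < eta /\ forall s', Rabs (s' - s) < eta -> Qset s'.
Proof.
  intros [t [Ht [Hz Hv]]].
  destruct (continuity_ab_maj (V s) 0 t Ht) as [mx [Hmx Hmx2]].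
  { intros c _. apply cont_pt, Vc. }
  set (m := Rmin (- V s mx) (- Z s t)).
  assert (Hm : 0 < m). { apply Rmin_pos. specialize (Hv mx Hmx2). lra. lra. }
  assert (He : 0 < exp (LL n * t)) by apply exp_pos.
  exists (m / (2 * exp (LL n * t))). split. apply Rdiv_lt_0_compat; lra.
  intros s' Hs'.
  assert (Hb : Rabs (s' - s) * exp (LL n * t) < m / 2).
  { apply Rmult_lt_compat_r with (r := exp (LL n * t)) in Hs'; auto.
    replace (m / (2 * exp (LL n * t)) * exp (LL n * t)) with (m / 2) in Hs' by (field; lra). lra. }
  exists t. split; auto. split.
  - destruct (dep_bound s s' t t) as [H2 _]. lra.
    assert (Hr := Rle_abs (Z s' t - Z s t)).
    assert (m <= - Z s t) by apply Rmin_r. lra.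
  - intros u Hu. destruct (dep_bound s s' u t Hu) as [_ H1].
    assert (Hr := Rle_abs (V s' u - V s u)).
    assert (m <= - V s mx) by apply Rmin_l. specialize (Hmx u Hu). lra.
Qed.

Lemma P0 : Pset 0.
Proof.
  destruct (ZV_init n Hn 0) as [Z0 V0].
  destruct (cont_eps_inv (Z 0) 0 (Zc 0 0) (1/2)) as [d [Hd Hx]]. lra.
  assert (Hpos : 0 < Fc (Z 0 0) (V 0 0)).
  { rewrite Z0, V0. unfold Fc. rewrite clip_id by (rewrite Rabs_pos_eq; lra). lra. }
  destruct (pos_right (V 0) (fun u => Fc (Z 0 u) (V 0 u)) 0 d Hd) as [u [Hu Hvu]].
  { intros x. apply ZV_deriv; auto. } { apply Fc_cont. } { exact Hpos. }
  exists u. split. lra. split. rewrite V0 in Hvu. lra.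
  intros w Hw. assert (Rabs (w - 0) < d) by (rewrite Rabs_pos_eq; lra).
  specialize (Hx w H). rewrite Z0 in Hx. assert (Hr := Rle_abs (1 - Z 0 w)).
  rewrite Rabs_minus_sym in Hx. lra.
Qed.


Lemma Vp_neg z : 0 < z <= 1 -> Vp n z < 0.
Proof. intros Hz. unfold Vp.
  assert (0 < z ^ 2) by (apply pow_lt; lra).
  replace (- (2 * n - 4) * z ^ 2 / 2 + (n - 1) / 2 * z ^ 3 / 3) with
    (z ^ 2 * (- (n - 2) + (n - 1) / 6 * z)) by field.
  assert (- (n - 2) + (n - 1) / 6 * z < 0) by nra. nra.
Qed.

Lemma En_mono s a b : a <= b -> (forall u, a <= u <= b -> Rabs (Z s u) <= 6) -> En n s a <= En n s b.
Proof.
  intros Hab Hb. assert (H := deriv_lower (En n s) (fun u => (n - 4) * (V s u) ^ 2) a b 0 Hab).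
  assert (0 * (b - a) <= En n s b - En n s a); [|lra]. apply H.
  intros x Hx. apply En_deriv; auto.
  intros x _. apply Rmult_le_pos. lra. apply pow2_ge_0.
Qed.

Lemma Z_noninc s a b : a <= b -> (forall u, a <= u <= b -> V s u <= 0) -> Z s b <= Z s a.
Proof.
  intros Hab Hb. assert (H := deriv_upper (Z s) (V s) a b 0 Hab).
  assert (Z s b - Z s a <= 0 * (b - a)); [|lra]. apply H; auto.
  intros x _. apply ZV_deriv; auto.
Qed.

Lemma notP_S : ~ Pset n.
Proof.
  intros [t [Ht [Hv Hz]]].
  destruct (ZV_init n Hn n) as [Z0 V0].
  destruct (first_hit (V n) 0 t Ht (Vc n)) as [c [Hc [Vc0 Hneg]]]. lra. lra.
  assert (Hle : forall u, 0 <= u <= c -> V n u <= 0).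
  { intros u Hu. destruct (Rlt_or_le u c). left; apply Hneg; lra. replace u with c by lra. lra. }
  assert (HZ : forall u, 0 <= u <= c -> 0 < Z n u <= 1).
  { intros u Hu. split. apply Hz; lra. rewrite <- Z0. apply Z_noninc. lra. intros; apply Hle; lra. }
  assert (HE := En_mono n 0 c ltac:(lra)).
  assert (En n n 0 <= En n n c).
  { apply HE. intros u Hu. destruct (HZ u Hu). rewrite Rabs_pos_eq; lra. }
  unfold En in H. rewrite Z0, V0, Vc0 in H.
  assert (Vp n (Z n c) < 0) by (apply Vp_neg; apply HZ; lra).
  unfold Vp at 1 in H. nra.
Qed.

Lemma shoot : exists s, 0 < s /\ ~ Pset s /\ ~ Qset s.
Proof.
  set (A := fun s => 0 <= s <= n /\ forall r, 0 <= r <= s -> Pset r).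
  assert (HA1 : bound A). { exists n. intros x [Hx _]. lra. }
  assert (HA2 : exists x, A x). { exists 0. split. lra. intros r Hr. replace r with 0 by lra. apply P0. }
  destruct (completeness A HA1 HA2) as [c [Hub Hlub]].
  destruct (P_open 0 P0) as [eta [Heta Hopen]].
  assert (Hc0 : Rmin (eta/2) n <= c).
  { apply Hub. split. split. apply Rmin_glb; lra. apply Rmin_r.
    intros r Hr. apply Hopen. rewrite Rminus_0_r, Rabs_pos_eq by lra.
    assert (Rmin (eta/2) n <= eta/2) by apply Rmin_l. lra. }
  assert (Hcpos : 0 < c). { assert (0 < Rmin (eta/2) n) by (apply Rmin_pos; lra). lra. }
  assert (Hcn : c <= n). { apply Hlub. intros x [Hx _]. lra. }
  assert (Hbelow : forall r, 0 <= r < c -> Pset r).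
  { intros r Hr. destruct (classic (exists e, A e /\ r < e)) as [[e [[He1 He2] He3]]|Hn'].
    - apply He2. lra.
    - exfalso. assert (c <= r). { apply Hlub. intros e He. destruct (Rle_or_lt e r); auto.
        exfalso; apply Hn'; exists e; auto. }
      lra. }
  exists c. split; auto. split.
  - intros HP. destruct (Rle_lt_or_eq_dec c n Hcn) as [Hlt|Heq].
    + destruct (P_open c HP) as [e [He Ho]].
      set (c' := Rmin (c + e/2) n).
      assert (A c').
      { split. split. unfold c', Rmin; destruct (Rle_dec (c + e/2) n); lra. apply Rmin_r.
        intros r Hr. destruct (Rlt_or_le r c). apply Hbelow; lra.
        apply Ho. assert (c' <= c + e/2) by apply Rmin_l. rewrite Rabs_pos_eq; lra. }
      assert (c' <= c) by (apply Hub; auto).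
      unfold c', Rmin in H0. destruct (Rle_dec (c + e/2) n); lra.
    + apply notP_S. rewrite <- Heq. exact HP.
  - intros HQ. destruct (Q_open c HQ) as [e [He Ho]].
    set (r := Rmax 0 (c - e/2)).
    assert (Hr : 0 <= r < c). { unfold r, Rmax; destruct (Rle_dec 0 (c - e/2)); lra. }
    apply (PQ_disj r). apply Hbelow; auto. apply Ho.
    unfold r, Rmax; destruct (Rle_dec 0 (c - e/2)); rewrite Rabs_left; lra.
Qed.

End Shoot.

Lemma exp_small x A g t0 : 0 < g -> 0 <= A ->
  (forall T, t0 <= T -> x <= A * exp (- g * T)) -> x <= 0.
Proof.
  intros Hg HA H. destruct (Rle_or_lt x 0) as [|Hx]; auto. exfalso.
  destruct HA as [HA|HA].
  - set (T := Rmax t0 ((ln A - ln x) / g + 1)).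
    assert (H1 : t0 <= T) by apply Rmax_l.
    assert (H2 : (ln A - ln x) / g + 1 <= T) by apply Rmax_r.
    specialize (H T H1).
    assert (- g * T < ln x - ln A).
    { assert (g * ((ln A - ln x) / g + 1) <= g * T) by (apply Rmult_le_compat_l; lra).
      replace (g * ((ln A - ln x) / g + 1)) with (ln A - ln x + g) in H0 by (field; lra). lra. }
    assert (exp (- g * T) < exp (ln x - ln A)) by (apply exp_increasing; auto).
    replace (ln x - ln A) with (ln x + - ln A) in H3 by ring.
    rewrite exp_plus, exp_Ropp, !exp_ln in H3 by auto.
    assert (A * exp (- g * T) < A * (x * / A)) by (apply Rmult_lt_compat_l; auto).
    replace (A * (x * / A)) with x in H4 by (field; lra). lra.
  - subst. specialize (H t0 (Rle_refl _)). lra.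
Qed.

Section Anal.
Variable n : R.
Hypothesis Hn : 5 <= n.
Variable sg : R.
Hypothesis Hsg : 0 < sg.
Hypothesis HnP : ~ Pset n sg.
Hypothesis HnQ : ~ Qset n sg.

Notation Zs := (Z n sg). Notation Vs := (V n sg).

Lemma HZd t : is_derive Zs t (Vs t). Proof. exact (proj1 (ZV_deriv n Hn sg t)). Qed.
Lemma HVd t : is_derive Vs t (Fc n (Zs t) (Vs t)). Proof. exact (proj2 (ZV_deriv n Hn sg t)). Qed.
Lemma Zinit : Zs 0 = 1. Proof. exact (proj1 (ZV_init n Hn sg)). Qed.
Lemma Vinit : Vs 0 = - sg. Proof. exact (proj2 (ZV_init n Hn sg)). Qed.

Lemma C_pos : forall t, 0 <= t -> 0 < Zs t.
Proof.
  intros t1 Ht1. destruct (Rlt_or_le 0 (Zs t1)) as [|Hle]; auto. exfalso.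
  assert (Hcm : forall x, continuous (fun u => - Zs u) x).
  { intros x. apply (@ex_derive_continuous R_AbsRing R_NormedModule).
    exists (- Vs x). apply (is_derive_opp Zs x (Vs x) (HZd x)). }
  destruct (first_hit (fun u => - Zs u) 0 t1 Ht1 Hcm) as [c [Hc [Zc0 Hpos]]].
  { rewrite Zinit. lra. } { lra. }
  assert (Zc0' : Zs c = 0) by lra. clear Zc0.
  assert (Hpos' : forall u, 0 <= u < c -> 0 < Zs u) by (intros u Hu; specialize (Hpos u Hu); lra). clear Hpos.
  assert (Hvle : forall u, 0 <= u < c -> Vs u <= 0).
  { intros u Hu. destruct (Rle_or_lt (Vs u) 0); auto. exfalso. apply HnP.
    exists u. split. lra. split; auto. intros w Hw. apply Hpos'. lra. }
  assert (Hz1 : forall u, 0 <= u < c -> Zs u <= 1).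
  { intros u Hu. rewrite <- Zinit. apply Z_noninc; auto. lra. intros w Hw. apply Hvle. lra. }
  assert (Hvlt : forall u, 0 <= u < c -> Vs u < 0).
  { intros u Hu. destruct (Hvle u Hu) as [|Heq]; auto. exfalso.
    assert (Hp : 0 < Fc n (Zs u) (Vs u)).
    { rewrite Heq. unfold Fc. assert (H1 := Hpos' u Hu). assert (H2 := Hz1 u Hu).
      rewrite clip_id by (rewrite Rabs_pos_eq; lra).
      assert (0 < Zs u * ((2*n-4) - (n-1)/2 * Zs u)) by (apply Rmult_lt_0_compat; nra).
      replace ((n - 4) * 0 + (2 * n - 4) * Zs u - (n - 1) / 2 * Zs u ^ 2) with
        (Zs u * ((2*n-4) - (n-1)/2 * Zs u)) by ring. auto. }
    destruct (pos_right Vs (fun w => Fc n (Zs w) (Vs w)) u (c - u)) as [u' [Hu' Hvu']]. lra.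
    apply HVd. apply Fc_cont; auto. auto.
    specialize (Hvle u' ltac:(lra)). lra. }
  assert (Hcpos : 0 < c) by lra.
  assert (Hvc : Vs c <= 0).
  { destruct (Rle_or_lt (Vs c) 0) as [|Hgt]; auto. exfalso.
    destruct (cont_eps_inv Vs c (Vc n Hn sg c) (Vs c)) as [d [Hd Hx]]. auto.
    set (u := Rmax 0 (c - d/2)).
    assert (Hu : 0 <= u < c) by (unfold u, Rmax; destruct (Rle_dec 0 (c - d/2)); lra).
    assert (Rabs (u - c) < d) by (unfold u, Rmax; destruct (Rle_dec 0 (c - d/2)); rewrite Rabs_left; lra).
    specialize (Hx u H). assert (Hr := Rle_abs (Vs c - Vs u)). rewrite Rabs_minus_sym in Hx.
    specialize (Hvlt u Hu). lra. }
  destruct Hvc as [Hvc|Hvc].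
  - (* crosses transversally: Q holds *)
    destruct (cont_eps_inv Vs c (Vc n Hn sg c) (- Vs c / 2)) as [d [Hd Hx]]. lra.
    assert (Hnear : forall u, c <= u <= c + d/2 -> Vs u <= Vs c / 2).
    { intros u Hu. assert (Rabs (u - c) < d) by (rewrite Rabs_pos_eq; lra).
      specialize (Hx u H). assert (Hr := Rle_abs (Vs u - Vs c)). lra. }
    apply HnQ. exists (c + d/2). split. lra. split.
    + assert (Hd2 := deriv_upper Zs Vs c (c + d/2) (Vs c / 2) ltac:(lra)).
      assert (Zs (c + d / 2) - Zs c <= Vs c / 2 * (c + d / 2 - c)).
      { apply Hd2. intros; apply HZd. auto. }
      assert (Vs c / 2 * (c + d / 2 - c) < 0).
      { replace (c + d / 2 - c) with (d/2) by ring. apply Rmult_neg_pos; lra. }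
      lra.
    + intros u Hu. destruct (Rlt_or_le u c). apply Hvlt; lra.
      specialize (Hnear u ltac:(lra)). lra.
  - (* tangential: energy argument *)
    set (M := 2 * n).
    assert (HZr : forall u, 0 <= u <= c -> 0 <= Zs u <= 1).
    { intros u Hu. destruct (Rlt_or_le u c). split. left; apply Hpos'; lra. apply Hz1; lra.
      replace u with c by lra. lra. }
    assert (HE : forall u, 0 <= u <= c -> En n sg u <= 0).
    { intros u Hu. assert (En n sg u <= En n sg c).
      { apply En_mono; auto. lra. intros w Hw. destruct (HZr w ltac:(lra)). rewrite Rabs_pos_eq; lra. }
      unfold En at 2 in H. rewrite Hvc, Zc0' in H. unfold Vp in H. 
      replace ((0:R) ^ 2 / 2 + (- (2 * n - 4) * 0 ^ 2 / 2 + (n - 1) / 2 * 0 ^ 3 / 3)) with 0 in H by (simpl; field).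
      exact H. }
    assert (Hvb : forall u, 0 <= u <= c -> - M * Zs u <= Vs u).
    { intros u Hu. specialize (HE u Hu). destruct (HZr u Hu) as [Hz0 Hz1'].
      unfold En, Vp in HE. destruct (Rle_or_lt (- M * Zs u) (Vs u)) as [|Hlt]; auto. exfalso.
      assert (Vs u ^ 2 > M ^ 2 * Zs u ^ 2).
      { assert (0 <= M * Zs u) by (unfold M; nra). nra. }
      assert (Vs u ^ 2 <= (2 * n - 4) * Zs u ^ 2) by nra.
      assert (M ^ 2 >= 2 * n - 4) by (unfold M; nra).
      assert (0 < Zs u \/ Zs u = 0) by lra. destruct H2.
      - assert (0 < Zs u ^ 2) by (apply pow_lt; auto). nra.
      - rewrite H2 in *. nra. }
    set (G := fun u => Zs u * exp (M * u)).
    assert (HG : 0 * (c - 0) <= G c - G 0).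
    { apply (deriv_lower G (fun u => (Vs u + M * Zs u) * exp (M * u))). lra.
      intros x Hx. unfold G. auto_derive. exists (Vs x). apply HZd.
      replace (Derive (fun x0 => Zs x0) x) with (Vs x) by (symmetry; apply is_derive_unique; apply HZd).
      ring.
      intros x Hx. specialize (Hvb x Hx). apply Rmult_le_pos. lra. left; apply exp_pos. }
    unfold G in HG. rewrite Zc0', Zinit in HG. rewrite Rmult_0_r, exp_0 in HG. lra.
Qed.

Lemma C_vneg t : 0 <= t -> Vs t <= 0.
Proof.
  intros Ht. destruct (Rle_or_lt (Vs t) 0) as [|H]; auto. exfalso. apply HnP.
  exists t. split; auto. split; auto. intros u Hu. apply C_pos. lra.
Qed.

Lemma C_le1 t : 0 <= t -> Zs t <= 1.
Proof. intros Ht. rewrite <- Zinit. apply Z_noninc; auto. intros u Hu. apply C_vneg. lra. Qed.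


Definition gam := n - 5/2.
Definition k0 := - sg - gam.

Lemma clipZ u : 0 <= u -> clip (Zs u) = Zs u.
Proof. intros Hu. apply clip_id. rewrite Rabs_pos_eq. assert (H := C_le1 u Hu); lra.
  left; apply C_pos; auto. Qed.

Lemma H1_mono t : 0 <= t -> k0 <= exp (3/2 * t) * (Vs t - gam * Zs t).
Proof.
  intros Ht.
  assert (H := deriv_lower (fun u => exp (3/2 * u) * (Vs u - gam * Zs u))
     (fun u => exp (3/2 * u) * (3/2 * (Vs u - gam * Zs u) + (Fc n (Zs u) (Vs u) - gam * Vs u))) 0 t 0 Ht).
  assert (0 * (t - 0) <= exp (3/2 * t) * (Vs t - gam * Zs t) - exp (3/2 * 0) * (Vs 0 - gam * Zs 0)).
  { apply H.
    - intros x _. auto_derive. split; [exists (Fc n (Zs x) (Vs x)); apply HVd|split; [exists (Vs x); apply HZd|auto]].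
      replace (Derive (fun x0 => Vs x0) x) with (Fc n (Zs x) (Vs x)) by (symmetry; apply is_derive_unique; apply HVd).
      replace (Derive (fun x0 => Zs x0) x) with (Vs x) by (symmetry; apply is_derive_unique; apply HZd).
      ring.
    - intros x Hx. apply Rmult_le_pos. left; apply exp_pos.
      unfold Fc. rewrite clipZ by lra. unfold gam.
      assert (H0 := C_pos x ltac:(lra)). assert (H1 := C_le1 x ltac:(lra)).
      replace (3 / 2 * (Vs x - (n - 5 / 2) * Zs x) +
        ((n - 4) * Vs x + (2 * n - 4) * Zs x - (n - 1) / 2 * Zs x ^ 2 - (n - 5 / 2) * Vs x))
        with (Zs x * ((n/2 - 1/4) - (n-1)/2 * Zs x)) by field.
      apply Rmult_le_pos; nra. }
  rewrite Rmult_0_r, exp_0, Rmult_1_l, Zinit, Vinit in H0. unfold k0. lra.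
Qed.

Definition Cd := (sg + gam) / (n - 1).

Lemma Zdecay t : 0 <= t -> Zs t <= Cd * exp (- (3/2) * t).
Proof.
  intros Ht.
  set (H2 := fun u => exp (- gam * u) * Zs u + k0 * exp (- (gam + 3/2) * u) / (gam + 3/2)).
  assert (Hg : 0 < gam) by (unfold gam; lra).
  assert (Hmono : forall T, t <= T -> H2 t <= H2 T).
  { intros T HT.
    assert (H := deriv_lower H2 (fun u => exp (- gam * u) * (Vs u - gam * Zs u) - k0 * exp (- (gam + 3/2) * u)) t T 0 HT).
    assert (0 * (T - t) <= H2 T - H2 t); [|lra]. apply H.
    - intros x _. unfold H2. auto_derive. exists (Vs x); apply HZd.
      replace (Derive (fun x0 => Zs x0) x) with (Vs x) by (symmetry; apply is_derive_unique; apply HZd).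
      field. lra.
    - intros x Hx. assert (H1 := H1_mono x ltac:(lra)).
      assert (Hm : k0 * exp (- (gam + 3/2) * x) <= exp (3/2 * x) * (Vs x - gam * Zs x) * exp (- (gam + 3/2) * x)).
      { apply Rmult_le_compat_r. left; apply exp_pos. auto. }
      replace (exp (3 / 2 * x) * (Vs x - gam * Zs x) * exp (- (gam + 3 / 2) * x)) with
        (exp (- gam * x) * (Vs x - gam * Zs x)) in Hm.
      lra.
      replace (exp (- gam * x)) with (exp (3/2 * x) * exp (- (gam + 3 / 2) * x)).
      ring. rewrite <- exp_plus. f_equal. ring. }
  assert (HH : H2 t <= 0).
  { apply (exp_small (H2 t) 1 gam t Hg ltac:(lra)). intros T HT.
    apply Rle_trans with (H2 T). apply Hmono; auto. unfold H2.
    assert (HZ1 := C_le1 T ltac:(lra)). assert (HZ0 := C_pos T ltac:(lra)).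
    assert (k0 * exp (- (gam + 3 / 2) * T) / (gam + 3 / 2) <= 0).
    { unfold Rdiv. apply Rmult_le_0_r. apply Rmult_le_0_r. unfold k0; lra. left; apply exp_pos.
      left; apply Rinv_0_lt_compat; lra. }
    assert (exp (- gam * T) * Zs T <= exp (- gam * T) * 1).
    { apply Rmult_le_compat_l. left; apply exp_pos. auto. }
    lra. }
  unfold H2 in HH.
  assert (Hm : exp (gam * t) * (exp (- gam * t) * Zs t) <= exp (gam * t) * (- (k0 * exp (- (gam + 3 / 2) * t) / (gam + 3 / 2)))).
  { apply Rmult_le_compat_l. left; apply exp_pos. lra. }
  replace (exp (gam * t) * (exp (- gam * t) * Zs t)) with (Zs t) in Hm.
  2:{ rewrite <- Rmult_assoc, <- exp_plus. replace (gam * t + - gam * t) with 0 by ring. rewrite exp_0; ring. }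
  replace (exp (gam * t) * - (k0 * exp (- (gam + 3 / 2) * t) / (gam + 3 / 2))) with
    (Cd * exp (- (3/2) * t)) in Hm. auto.
  unfold Cd, k0. replace (n - 1) with (gam + 3/2) by (unfold gam; lra).
  replace (exp (- (3/2) * t)) with (exp (gam * t) * exp (- (gam + 3 / 2) * t)).
  field. lra. rewrite <- exp_plus. f_equal. ring.
Qed.

Lemma Cd_pos : 0 < Cd.
Proof. unfold Cd, gam. apply Rdiv_lt_0_compat; lra. Qed.


Lemma Vdecay t : 0 <= t -> Vs t ^ 2 <= k0 ^ 2 * exp (- (3/2) * t).
Proof.
  intros Ht. assert (H := H1_mono t Ht).
  assert (Hm : k0 * exp (- (3/2) * t) <= exp (3 / 2 * t) * (Vs t - gam * Zs t) * exp (- (3/2) * t)).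
  { apply Rmult_le_compat_r. left; apply exp_pos. auto. }
  replace (exp (3 / 2 * t) * (Vs t - gam * Zs t) * exp (- (3/2) * t)) with (Vs t - gam * Zs t) in Hm.
  2:{ replace (exp (3 / 2 * t) * (Vs t - gam * Zs t) * exp (- (3/2) * t)) with
        (exp (3 / 2 * t) * exp (- (3/2) * t) * (Vs t - gam * Zs t)) by ring.
      rewrite <- exp_plus. replace (3 / 2 * t + - (3 / 2) * t) with 0 by ring. rewrite exp_0; ring. }
  assert (Hg : 0 < gam) by (unfold gam; lra).
  assert (Hz := C_pos t Ht). assert (Hv := C_vneg t Ht).
  assert (Hk : k0 < 0) by (unfold k0; lra).
  assert (Hlow : k0 * exp (- (3/2) * t) <= Vs t) by nra.
  assert (He1 : exp (- (3/2) * t) <= 1) by (rewrite <- exp_0; apply exp_mono; lra).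
  assert (He0 : 0 < exp (- (3/2) * t)) by apply exp_pos.
  assert (0 <= - Vs t <= - k0 * exp (- (3/2) * t)) by lra.
  assert (Vs t ^ 2 <= (k0 * exp (- (3/2) * t)) ^ 2) by nra.
  assert ((k0 * exp (- (3/2) * t)) ^ 2 <= k0 ^ 2 * exp (- (3/2) * t)).
  { replace ((k0 * exp (- (3/2) * t)) ^ 2) with (k0 ^ 2 * exp (- (3/2) * t) * exp (- (3/2) * t)) by ring.
    assert (0 <= k0 ^ 2 * exp (- (3/2) * t)) by (apply Rmult_le_pos; [apply pow2_ge_0|lra]). nra. }
  lra.
Qed.

Lemma En0_le : En n sg 0 <= 0.
Proof.
  apply (exp_small (En n sg 0) (k0 ^ 2 / 2 + (n - 1) / 6 * Cd) (3/2) 0). lra.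
  assert (H := Cd_pos). assert (0 <= k0 ^ 2) by apply pow2_ge_0. 
  apply Rplus_le_le_0_compat. lra. apply Rmult_le_pos; lra.
  intros T HT. 
  assert (HE : En n sg 0 <= En n sg T).
  { apply En_mono; auto. intros u Hu. assert (H1 := C_pos u ltac:(lra)). assert (H2 := C_le1 u ltac:(lra)).
    rewrite Rabs_pos_eq; lra. }
  eapply Rle_trans. exact HE. unfold En, Vp.
  assert (H1 := C_pos T HT). assert (H2 := C_le1 T HT). assert (H3 := Zdecay T HT). assert (H4 := Vdecay T HT).
  assert (Zs T ^ 3 <= Zs T) by nra.
  assert (0 <= (2 * n - 4) * Zs T ^ 2) by (apply Rmult_le_pos; [lra|apply pow2_ge_0]).
  assert ((n - 1) / 6 * Zs T <= (n - 1) / 6 * (Cd * exp (- (3 / 2) * T))) by (apply Rmult_le_compat_l; lra).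
  assert ((n - 1) / 6 * Zs T ^ 3 <= (n - 1) / 6 * Zs T) by (apply Rmult_le_compat_l; lra).
  replace (- (2 * n - 4) * Zs T ^ 2 / 2 + (n - 1) / 2 * Zs T ^ 3 / 3) with
    (- ((2 * n - 4) * Zs T ^ 2) / 2 + (n - 1) / 6 * Zs T ^ 3) by field.
  replace ((k0 ^ 2 / 2 + (n - 1) / 6 * Cd) * exp (- (3 / 2) * T)) with
    (k0 ^ 2 * exp (- (3 / 2) * T) / 2 + (n - 1) / 6 * (Cd * exp (- (3 / 2) * T))) by field.
  lra.
Qed.

Lemma back_pos t : t <= 0 -> 0 < Zs t < 6.
Proof.
  intros Ht. destruct (classic (0 < Zs t < 6)) as [|Hn']; auto. exfalso.
  set (f := fun x => - (Zs (- x) * (6 - Zs (- x)))).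
  assert (Hfd : forall x, ex_derive f x).
  { intros x. unfold f. auto_derive; repeat split; eexists; apply HZd. }
  assert (Hfc : forall x, continuous f x).
  { intros x. apply (@ex_derive_continuous R_AbsRing R_NormedModule). apply Hfd. }
  destruct (first_hit f 0 (- t) ltac:(lra) Hfc) as [c [Hc [Hfc0 Hneg]]].
  { unfold f. rewrite Ropp_0, Zinit. lra. }
  { unfold f. rewrite Ropp_involutive. 
    destruct (Rle_or_lt (Zs t) 0). nra. assert (6 <= Zs t) by lra. nra. }
  set (us := - c).
  assert (Hin : forall u, us < u <= 0 -> 0 < Zs u < 6).
  { intros u Hu. specialize (Hneg (- u) ltac:(unfold us in Hu; lra)). unfold f in Hneg.
    rewrite Ropp_involutive in Hneg.
    destruct (Rle_or_lt (Zs u) 0). nra. destruct (Rle_or_lt 6 (Zs u)). nra. lra. }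
  assert (Hus : Zs us = 0 \/ Zs us = 6).
  { unfold f in Hfc0. fold us in Hfc0. 
    assert (Zs us * (6 - Zs us) = 0) by lra. destruct (Rmult_integral _ _ H). auto. right; lra. }
  assert (Hb : forall u, us <= u <= 0 -> Rabs (Zs u) <= 6).
  { intros u Hu. destruct (Rle_lt_or_eq_dec us u ltac:(lra)) as [Hlt|Heq].
    - destruct (Hin u ltac:(lra)). rewrite Rabs_pos_eq; lra.
    - subst u. destruct Hus as [-> | ->]; rewrite Rabs_pos_eq; lra. }
  destruct (cont_eps_inv Vs 0 (Vc n Hn sg 0) (sg / 2)) as [d [Hd Hdx]]. lra.
  set (w := Rmax us (- d / 2)).
  assert (Hus0 : us < 0) by (unfold us; lra).
  assert (Hw : us <= w < 0). { unfold w, Rmax. destruct (Rle_dec us (- d/2)); lra. }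
  assert (Hw2 : - d / 2 <= w) by apply Rmax_r.
  assert (HEw : (n - 4) * (sg ^ 2 / 4) * (0 - w) <= En n sg 0 - En n sg w).
  { apply (deriv_lower (En n sg) (fun u => (n - 4) * (Vs u) ^ 2)). lra.
    intros x Hx. apply En_deriv; auto. apply Hb; lra.
    intros x Hx. apply Rmult_le_compat_l. lra.
    assert (Rabs (x - 0) < d) by (rewrite Rminus_0_r, Rabs_left1; lra).
    specialize (Hdx x H). rewrite Vinit in Hdx. assert (Hr := Rle_abs (Vs x - - sg)).
    assert (Hr2 := Rle_abs (- (Vs x - - sg))). rewrite Rabs_Ropp in Hr2.
    assert (Vs x < - sg / 2) by lra. nra. }
  assert (HEu : En n sg us <= En n sg w).
  { apply En_mono; auto. lra. intros u Hu. apply Hb. lra. }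
  assert (H0 := En0_le).
  assert (0 < (n - 4) * (sg ^ 2 / 4) * (0 - w)).
  { apply Rmult_lt_0_compat. apply Rmult_lt_0_compat. lra. assert (0 < sg ^ 2) by (apply pow_lt; lra). lra. lra. }
  assert (HL : Vp n (Zs us) <= En n sg us).
  { unfold En. assert (0 <= Vs us ^ 2) by apply pow2_ge_0. lra. }
  assert (0 <= Vp n (Zs us)).
  { unfold Vp. destruct Hus as [Hz|Hz]; rewrite Hz; simpl; nra. }
  lra.
Qed.

End Anal.

Lemma good_sol (n : R) (Hn : 5 <= n) : exists (Zf Vf : R -> R) (C : R), 0 < C /\
  (forall t, is_derive Zf t (Vf t)) /\
  (forall t, is_derive Vf t ((n - 4) * Vf t + (2 * n - 4) * Zf t - (n - 1) / 2 * Zf t ^ 2)) /\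
  (forall t, 0 < Zf t < 6) /\ (forall t, 0 <= t -> Zf t <= C * exp (- (3/2) * t)).
Proof.
  destruct (shoot n Hn) as [sg [Hsg [HnP HnQ]]].
  assert (Hb : forall t, 0 < Z n sg t < 6).
  { intros t. destruct (Rle_or_lt 0 t) as [Ht|Ht].
    - assert (H1 := C_pos n Hn sg HnP HnQ t Ht). assert (H2 := C_le1 n Hn sg HnP HnQ t Ht). lra.
    - apply (back_pos n Hn sg Hsg HnP HnQ). lra. }
  exists (Z n sg), (V n sg), (Cd n sg). split. apply Cd_pos; auto. split.
  intros t. apply ZV_deriv; auto. split.
  intros t. destruct (ZV_deriv n Hn sg t) as [_ H].
  unfold Fc in H. rewrite clip_id in H by (destruct (Hb t); rewrite Rabs_pos_eq; lra). exact H.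
  split; auto. intros t Ht. apply Zdecay; auto.
Qed.

Lemma shift_deriv (f : R -> R) c t d : is_derive f (t + c) d -> is_derive (fun s => f (s + c)) t d.
Proof.
  intros H. assert (H2 := is_derive_comp f (fun s => s + c) t d 1 H).
  assert (H3 : is_derive (fun s => s + c) t 1). { auto_derive; auto; ring. }
  specialize (H2 H3). unfold scal in H2; simpl in H2. unfold mult in H2; simpl in H2.
  rewrite Rmult_1_l in H2. exact H2.
Qed.

Lemma sol_general (N : nat) (z v : R -> R) C T0 :
  (forall t, is_derive z t (v t)) ->
  (forall t, is_derive v t ((INR N - 4) * v t + (2 * INR N - 4) * z t - (INR N - 1) / 2 * z t ^ 2)) ->
  (forall t, 0 < z t < 6) -> 0 < C ->
  (forall t, T0 <= t -> z t <= C * exp (- (3/2) * t)) ->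
  is_solution N z /\ positive_fun z.
Proof.
  intros Hz Hv Hb HC Hd. set (n := INR N).
  assert (Dz : forall t, Derive z t = v t) by (intros; apply is_derive_unique; auto).
  assert (Dv : forall t, Derive (Derive z) t = (n - 4) * v t + (2 * n - 4) * z t - (n - 1) / 2 * z t ^ 2).
  { intros t. rewrite (Derive_ext (Derive z) v t Dz). apply is_derive_unique; auto. }
  split; [|intros t; apply Hb].
  split; [|split; [|split]].
  - split; [|split].
    + intros t. exists (v t). auto.
    + intros t. apply ex_derive_ext with v. intros; symmetry; auto. eexists; apply Hv.
    + intros t. apply continuous_ext with (fun s => (n - 4) * v s + (2 * n - 4) * z s - (n - 1) / 2 * z s ^ 2).
      intros; symmetry; auto.
      apply (@ex_derive_continuous R_AbsRing R_NormedModule). auto_derive.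
      repeat split; eexists; [apply Hv|apply Hz|apply Hz].
  - intros t. rewrite Dv, Dz. fold n. field.
  - apply is_lim_spec. intros eps. simpl. exists (ln (eps / 6)). intros t Ht.
    rewrite Rminus_0_r. destruct (Hb t). rewrite Rabs_pos_eq.
    assert (exp t < eps / 6). { rewrite <- (exp_ln (eps/6)). apply exp_increasing; auto.
      apply Rdiv_lt_0_compat. apply cond_pos. lra. }
    assert (0 < exp t) by apply exp_pos. nra.
    apply Rmult_le_pos. left; apply exp_pos. lra.
  - apply is_lim_spec. intros eps. simpl. exists (Rmax T0 (2 * ln (C / eps))). intros t Ht.
    assert (H1 := Rmax_l T0 (2 * ln (C / eps))). assert (H2 := Rmax_r T0 (2 * ln (C / eps))).
    rewrite Rminus_0_r. destruct (Hb t). rewrite Rabs_pos_eq.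
    2:{ apply Rmult_le_pos. left; apply exp_pos. lra. }
    assert (He : exp t * z t <= exp t * (C * exp (- (3/2) * t))).
    { apply Rmult_le_compat_l. left; apply exp_pos. apply Hd. lra. }
    replace (exp t * (C * exp (- (3 / 2) * t))) with (C * exp (- (1/2) * t)) in He.
    2:{ replace (- (1/2) * t) with (t + - (3/2) * t) by field. rewrite exp_plus. ring. }
    assert (exp (- (1/2) * t) < eps / C).
    { assert (HCe : 0 < C / eps) by (apply Rdiv_lt_0_compat; [lra | apply cond_pos]).
      assert (Hep := cond_pos eps).
      replace (eps / C) with (exp (- ln (C / eps))).
      2:{ rewrite exp_Ropp, exp_ln by auto. field. lra. }
      apply exp_increasing; lra. }
    assert (C * exp (- (1 / 2) * t) < C * (eps / C)) by (apply Rmult_lt_compat_l; auto).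
    replace (C * (eps / C)) with (pos eps) in H4 by (field; lra). lra.
Qed.

(* Cantor: R is not enumerable *)
Fixpoint nest (u : nat -> R) (k : nat) : R * R :=
  match k with
  | O => (0, 1)
  | S k' => let ab := nest u k' in
      if Rle_dec (u k') (fst ab + (snd ab - fst ab) / 2)
      then (fst ab + 2 * (snd ab - fst ab) / 3, snd ab)
      else (fst ab, fst ab + (snd ab - fst ab) / 3)
  end.

Lemma nest_props u k :
  fst (nest u k) < snd (nest u k) /\
  fst (nest u k) <= fst (nest u (S k)) /\ snd (nest u (S k)) <= snd (nest u k) /\
  (u k < fst (nest u (S k)) \/ snd (nest u (S k)) < u k).
Proof.
  induction k as [|k IH].
  - simpl. destruct (Rle_dec (u 0%nat) (0 + (1 - 0) / 2)); simpl; lra.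
  - destruct IH as [H1 [H2 [H3 H4]]].
    assert (Hlt : fst (nest u (S k)) < snd (nest u (S k))).
    { simpl. destruct (Rle_dec (u k) (fst (nest u k) + (snd (nest u k) - fst (nest u k)) / 2)); simpl; lra. }
    split; auto.
    change (nest u (S (S k))) with
      (let ab := nest u (S k) in
      if Rle_dec (u (S k)) (fst ab + (snd ab - fst ab) / 2)
      then (fst ab + 2 * (snd ab - fst ab) / 3, snd ab)
      else (fst ab, fst ab + (snd ab - fst ab) / 3)).
    cbv zeta. 
    destruct (Rle_dec (u (S k)) (fst (nest u (S k)) + (snd (nest u (S k)) - fst (nest u (S k))) / 2)); cbn [fst snd]; lra.
Qed.

Lemma nest_mono u i j : (i <= j)%nat -> fst (nest u i) <= fst (nest u j) /\ snd (nest u j) <= snd (nest u i).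
Proof.
  intros H. induction H. lra. destruct (nest_props u m) as [_ [H1 [H2 _]]]. lra.
Qed.

Lemma R_not_enum (u : nat -> R) : exists x, forall m, x <> u m.
Proof.
  assert (Hab : forall i j, fst (nest u i) <= snd (nest u j)).
  { intros i j. destruct (Nat.le_ge_cases i j) as [H|H].
    - destruct (nest_mono u i j H). destruct (nest_props u j). lra.
    - destruct (nest_mono u j i H). destruct (nest_props u i). lra. }
  set (E := fun x => exists i, x = fst (nest u i)).
  destruct (completeness E) as [x [Hub Hlub]].
  { exists (snd (nest u 0)). intros y [i ->]. apply Hab. }
  { exists (fst (nest u 0)). exists 0%nat. auto. }
  exists x. intros m Hm.
  assert (H1 : fst (nest u (S m)) <= x) by (apply Hub; exists (S m); auto).
  assert (H2 : x <= snd (nest u (S m))) by (apply Hlub; intros y [i ->]; apply Hab).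
  destruct (nest_props u m) as [_ [_ [_ H]]]. lra.
Qed.

Lemma periodic_contra (Zf : R -> R) C : 0 < C -> (forall t, 0 < Zf t) ->
  (forall t, 0 <= t -> Zf t <= C * exp (- (3/2) * t)) ->
  forall d, 0 < d -> ~ (forall u, Zf (u + d) = Zf u).
Proof.
  intros HC Hp Hd d Hd0 Hper.
  assert (Hm : forall m, Zf (INR m * d) = Zf 0).
  { induction m as [|m IH]. simpl. f_equal. ring.
    rewrite S_INR. replace ((INR m + 1) * d) with (INR m * d + d) by ring. rewrite Hper. auto. }
  set (a := Zf 0). assert (Ha : 0 < a) by apply Hp.
  destruct (INR_unbounded (C / (a * d))) as [m Hmm].
  set (T := INR m * d).
  assert (HT0 : 0 <= T) by (unfold T; apply Rmult_le_pos; [apply pos_INR|lra]).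
  assert (HaT : C < a * T).
  { unfold T. apply Rmult_gt_compat_r with (r := a * d) in Hmm; [|nra].
    replace (C / (a * d) * (a * d)) with C in Hmm by (field; nra). nra. }
  assert (H1 := Hd T HT0). unfold T in H1. rewrite Hm in H1. fold T in H1. fold a in H1.
  assert (H2 := exp_ineq1_le ((3/2) * T)).
  assert (H3 : exp (- (3/2) * T) * exp ((3/2) * T) = 1).
  { rewrite <- exp_plus. replace (- (3 / 2) * T + 3 / 2 * T) with 0 by ring. apply exp_0. }
  assert (H4 : 0 < exp (- (3/2) * T)) by apply exp_pos.
  assert (a * exp (3/2 * T) <= C * exp (- (3 / 2) * T) * exp (3/2 * T)) by
    (apply Rmult_le_compat_r; [left; apply exp_pos|auto]).
  rewrite Rmult_assoc, H3, Rmult_1_r in H.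
  nra.
Qed.

Theorem theorem3p6 (N : nat) (hN : (4 < N)%nat) :
  ~ (exists f : nat -> (R -> R),
       forall z : R -> R, is_solution N z -> positive_fun z ->
         exists n : nat, f n = z).
Proof.
  intros [f Hf].
  assert (Hn : 5 <= INR N). { apply (le_INR 5 N) in hN. simpl in hN. lra. }
  destruct (good_sol (INR N) Hn) as [Zf [Vf [C [HC [HZ [HV [Hb Hd]]]]]]].
  set (g := fun c => fun t => Zf (t + c)).
  assert (Hsol : forall c, is_solution N (g c) /\ positive_fun (g c)).
  { intros c. apply (sol_general N (g c) (fun t => Vf (t + c)) (C * exp (- (3/2) * c)) (- c)).
    - intros t. unfold g. apply shift_deriv. apply HZ.
    - intros t. unfold g. apply shift_deriv. apply HV.
    - intros t. apply Hb.
    - apply Rmult_lt_0_compat; auto. apply exp_pos.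
    - intros t Ht. unfold g. eapply Rle_trans. apply Hd. lra.
      replace (- (3 / 2) * (t + c)) with (- (3/2) * c + - (3/2) * t) by ring.
      rewrite exp_plus. lra. }
  assert (Hinj : forall c1 c2, g c1 = g c2 -> c1 = c2).
  { intros c1 c2 Heq. destruct (Req_dec c1 c2) as [|Hne]; auto. exfalso.
    assert (Ht : forall t, Zf (t + c1) = Zf (t + c2)).
    { intros t. change (g c1 t = g c2 t). rewrite Heq. auto. }
    assert (Hp : forall t, 0 < Zf t) by (intros; apply Hb).
    destruct (Rlt_or_le c1 c2).
    - apply (periodic_contra Zf C HC Hp Hd (c2 - c1)). lra.
      intros u. specialize (Ht (u - c1)). replace (u - c1 + c1) with u in Ht by ring.
      replace (u - c1 + c2) with (u + (c2 - c1)) in Ht by ring. auto.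
    - apply (periodic_contra Zf C HC Hp Hd (c1 - c2)). lra.
      intros u. specialize (Ht (u - c2)). replace (u - c2 + c2) with u in Ht by ring.
      replace (u - c2 + c1) with (u + (c1 - c2)) in Ht by ring. auto. }
  set (u := fun m => match excluded_middle_informative (exists c, f m = g c) with
                     | left h => proj1_sig (constructive_indefinite_description _ h)
                     | right _ => 0 end).
  destruct (R_not_enum u) as [x Hx].
  destruct (Hf (g x) (proj1 (Hsol x)) (proj2 (Hsol x))) as [m Hm].
  apply (Hx m). unfold u.
  destruct (excluded_middle_informative (exists c, f m = g c)) as [h|h].
  - destruct (constructive_indefinite_description _ h) as [c Hc]. simpl.
    apply Hinj. rewrite <- Hc. auto.
  - exfalso. apply h. exists x. auto.
Qed.
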